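(* Let $\eta_\varepsilon$ be as in the context. Let $b\in(-1,1)$, $a\in(0,1)$ (possibly depending on $\varepsilon$), and let $\dot a,\dot b,\dot B$ be real parameters. Set $A=\sqrt{1-b^2}$, $B=\frac{1}{\sqrt2}\sqrt{1-a^2}\sqrt{1-b^2}$, $z_\pm=\varepsilon^{-1}B(x\pm a)$, and define $$ K_{\rm overlap}=\frac12\dot b(1-b^2)^{1/2}\int_{\mathbb R}\eta_\varepsilon^2\big(\tanh(z_+)\mathrm{sech}^2(z_-)-\tanh(z_-)\mathrm{sech}^2(z_+)\big)dx-\varepsilon^{-1}b(1-b^2)^{3/2}(B\dot a+\dot Ba)\int_{\mathbb R}\eta_\varepsilon^2\,\mathrm{sech}^2(z_+)\mathrm{sech}^2(z_-)\,dx . $$ Assume there are constants $C_1,C_2>0$ with $a\le C_1\varepsilon^{1/6}$ and $e^{-4Ba\varepsilon^{-1}}\le C_2\varepsilon^2|\log\varepsilon|$ for all small $\varepsilon$. Then, as $\varepsilon\to0$, $$ K_{\rm overlap}=2\varepsilon\dot b(1-b^2)^{1/2}B^{-1}(1-a^2)\big(1+\mathcal O(\varepsilon^{1/3})\big)-16\,b(1-b^2)^{3/2}\big(\dot a+B^{-1}\dot Ba\big)(1-a^2)e^{-4Ba\varepsilon^{-1}}\big(2Ba\varepsilon^{-1}-1\big)\big(1+\mathcal O(\varepsilon^{1/3})\big). $$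
   Context: For all sufficiently small $\varepsilon>0$, $\eta_\varepsilon:\mathbb R\to(0,\infty)$ is a smooth solution of $\varepsilon^2\eta_\varepsilon''+(1-x^2-\eta_\varepsilon^2)\eta_\varepsilon=0$ on $\mathbb R$ that decays to zero as $|x|\to\infty$ faster than any exponential, and it has the following properties: $\eta_\varepsilon(x)\to\eta_0(x)$ pointwise as $\varepsilon\to0$, where $\eta_0(x)=(1-x^2)^{1/2}$ for $|x|<1$ and $\eta_0(x)=0$ for $|x|>1$; for every compact $K\subset(-1,1)$ there is $C_K>0$ with $\|\eta_\varepsilon-\eta_0\|_{C^1(K)}\le C_K\varepsilon^2$; and there is $C>0$ with $\|\eta_\varepsilon-\eta_0\|_{L^\infty}\le C\varepsilon^{1/3}$, $\|\eta_\varepsilon'\|_{L^\infty}\le C\varepsilon^{-1/3}$, $\|\eta_\varepsilon''\|_{L^\infty}\le C\varepsilon^{-1}$. The notation $f=g(1+\mathcal O(\varepsilon^{1/3}))$ means $|f/g-1|\le C\varepsilon^{1/3}$ for some constant $C$ and all sufficiently small $\varepsilon$. *)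

(* Defs.v *)
From Stdlib Require Import Reals Lra.
Open Scope R_scope.

Definition sech (x : R) : R := / cosh x.

Definition eta0 (x : R) : R :=
  if Rlt_dec (Rabs x) 1 then sqrt (1 - x ^ 2) else 0.

Definition deta0 (x : R) : R := - x / sqrt (1 - x ^ 2).

Definition smooth (f : R -> R) : Prop :=
  exists D : nat -> R -> R, D O = f /\
    forall (n : nat) (x : R), derivable_pt_lim (D n) x (D (S n) x).

Definition improper_integral (f : R -> R) (l : R) : Prop :=
  (forall M : R, inhabited (Riemann_integrable f (- M) M)) /\
  forall e : R, 0 < e -> exists M0 : R, forall M : R, M0 <= M ->
    forall pr : Riemann_integrable f (- M) M, Rabs (RiemannInt pr - l) < e.

Definition eta_family (eta deta ddeta : R -> R -> R) : Prop :=
  (exists e0 : R, 0 < e0 /\ forall eps : R, 0 < eps < e0 ->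
     smooth (eta eps) /\
     (forall x, derivable_pt_lim (eta eps) x (deta eps x)) /\
     (forall x, derivable_pt_lim (deta eps) x (ddeta eps x)) /\
     (forall x, 0 < eta eps x) /\
     (forall x, eps ^ 2 * ddeta eps x + (1 - x ^ 2 - (eta eps x) ^ 2) * eta eps x = 0) /\
     (forall k e : R, 0 < k -> 0 < e -> exists M : R, forall x : R,
        M <= Rabs x -> Rabs (eta eps x) * exp (k * Rabs x) < e)) /\
  (forall x e : R, 0 < e -> exists d : R, 0 < d /\ forall eps : R,
     0 < eps < d -> Rabs (eta eps x - eta0 x) < e) /\
  (forall c d : R, -1 < c -> d < 1 ->
     exists CK e1 : R, 0 < CK /\ 0 < e1 /\ forall eps : R, 0 < eps < e1 ->
       forall x : R, c <= x <= d ->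
         Rabs (eta eps x - eta0 x) <= CK * eps ^ 2 /\
         Rabs (deta eps x - deta0 x) <= CK * eps ^ 2) /\
  (exists C e1 : R, 0 < C /\ 0 < e1 /\ forall eps : R, 0 < eps < e1 ->
     forall x : R,
       Rabs (eta eps x - eta0 x) <= C * Rpower eps (1/3) /\
       Rabs (deta eps x) <= C * / Rpower eps (1/3) /\
       Rabs (ddeta eps x) <= C * / eps).

Definition Bpar (a b : R) : R := / sqrt 2 * sqrt (1 - a ^ 2) * sqrt (1 - b ^ 2).

Definition f_tanh (eta : R -> R) (eps a b : R) (x : R) : R :=
  let B := Bpar a b in
  let zp := / eps * B * (x + a) in
  let zm := / eps * B * (x - a) in
  (eta x) ^ 2 * (tanh zp * (sech zm) ^ 2 - tanh zm * (sech zp) ^ 2).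

Definition f_sech (eta : R -> R) (eps a b : R) (x : R) : R :=
  let B := Bpar a b in
  let zp := / eps * B * (x + a) in
  let zm := / eps * B * (x - a) in
  (eta x) ^ 2 * ((sech zp) ^ 2 * (sech zm) ^ 2).

(* Main.v *)
Require Import Defs.
From Stdlib Require Import Reals Lra Psatz.
Open Scope R_scope.

Definition prim (F f : R -> R) := (forall x, derivable_pt_lim F x (f x)) /\ continuity f.

Lemma ftc F f (H : prim F f) a b (pr : Riemann_integrable f a b) :
  RiemannInt pr = F b - F a.
Proof.
  destruct H as [Hd Hc].
  set (d := (fun x => exist (fun l => derivable_pt_abs F x l) (f x) (Hd x)) : derivable F).
  assert (Hc' : continuity (derive F d)) by exact Hc.
  exact (@FTC_Riemann (@mkC1 F d Hc') a b pr).
Qed.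

Lemma cont_int f a b : continuity f -> Riemann_integrable f a b.
Proof.
  intro Hc. destruct (Rle_dec a b).
  - apply continuity_implies_RiemannInt; auto.
  - apply RiemannInt_P1; apply continuity_implies_RiemannInt; [lra|auto].
Qed.

Lemma imp_exact F f V : prim F f ->
  (forall e, 0 < e -> exists M0, forall M, M0 <= M -> Rabs (F M - F (-M) - V) < e) ->
  improper_integral f V.
Proof.
  intros HP Hl. split.
  - intro M. constructor. apply cont_int, HP.
  - intros e he. destruct (Hl e he) as [M0 HM0]. exists M0. intros M HM pr.
    rewrite (ftc F f HP). apply HM0; auto.
Qed.

Lemma imp_lin f g l1 l2 c : improper_integral f l1 -> improper_integral g l2 ->
  improper_integral (fun x => f x + c * g x) (l1 + c * l2).
Proof.
  intros [Hf1 Hf2] [Hg1 Hg2]. split.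
  - intro M. destruct (Hf1 M) as [p1]. destruct (Hg1 M) as [p2].
    constructor. apply RiemannInt_P10; auto.
  - intros e he.
    assert (he1 : 0 < e / 2) by lra.
    assert (he2 : 0 < e / (2 * (Rabs c + 1))).
    { apply Rdiv_lt_0_compat; [lra|]. pose proof (Rabs_pos c); lra. }
    destruct (Hf2 _ he1) as [M1 HM1]. destruct (Hg2 _ he2) as [M2 HM2].
    exists (Rmax M1 M2). intros M HM pr.
    destruct (Hf1 M) as [p1]. destruct (Hg1 M) as [p2].
    rewrite (RiemannInt_P13 p1 p2 pr).
    assert (A1 := HM1 M (Rle_trans _ _ _ (Rmax_l _ _) HM) p1).
    assert (A2 := HM2 M (Rle_trans _ _ _ (Rmax_r _ _) HM) p2).
    replace (RiemannInt p1 + c * RiemannInt p2 - (l1 + c * l2)) with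
      ((RiemannInt p1 - l1) + c * (RiemannInt p2 - l2)) by ring.
    eapply Rle_lt_trans. apply Rabs_triang. rewrite Rabs_mult.
    assert (Rabs c * Rabs (RiemannInt p2 - l2) <= (Rabs c + 1) * (e / (2 * (Rabs c + 1)))).
    { apply Rmult_le_compat; try apply Rabs_pos; lra. }
    replace ((Rabs c + 1) * (e / (2 * (Rabs c + 1)))) with (e/2) in H.
    lra. field. pose proof (Rabs_pos c); lra.
Qed.

Lemma int_abs_le h p M (pr : Riemann_integrable h (-M) M) (pp : Riemann_integrable p (-M) M) :
  0 <= M -> (forall x, Rabs (h x) <= p x) -> Rabs (RiemannInt pr) <= RiemannInt pp.
Proof.
  intros HM Hh.
  eapply Rle_trans. apply (RiemannInt_P17 pr (RiemannInt_P16 pr)). lra.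
  apply RiemannInt_P19. lra. intros; auto.
Qed.

Lemma int_abs_le2 h p a b (pr : Riemann_integrable h a b) (pp : Riemann_integrable p a b) :
  a <= b -> (forall x, Rabs (h x) <= p x) -> Rabs (RiemannInt pr) <= RiemannInt pp.
Proof.
  intros HM Hh.
  eapply Rle_trans. apply (RiemannInt_P17 pr (RiemannInt_P16 pr)). lra.
  apply RiemannInt_P19. lra. intros; auto.
Qed.

Lemma imp_bound h l p P U M1 : improper_integral h l -> prim P p ->
  (forall x, Rabs (h x) <= p x) -> (forall M, M1 <= M -> P M - P (-M) <= U) -> Rabs l <= U.
Proof.
  intros [H1 H2] HP Hh HU.
  destruct (Rle_lt_dec (Rabs l) U) as [|Hlt]; auto. exfalso.
  assert (he : 0 < Rabs l - U) by lra.
  destruct (H2 _ he) as [M0 HM0].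
  set (M := Rmax (Rmax M0 M1) 0).
  assert (HM0' : M0 <= M) by (unfold M; eapply Rle_trans; [apply Rmax_l|apply Rmax_l]).
  assert (HM1' : M1 <= M) by (unfold M; eapply Rle_trans; [apply Rmax_r|apply Rmax_l]).
  assert (HM2' : 0 <= M) by (unfold M; apply Rmax_r).
  destruct (H1 M) as [pr].
  assert (A := HM0 M HM0' pr).
  assert (B := int_abs_le h p M pr (cont_int p _ _ (proj2 HP)) HM2' Hh).
  rewrite (ftc P p HP) in B. assert (C := HU M HM1').
  assert (D : Rabs l <= Rabs (RiemannInt pr) + Rabs (RiemannInt pr - l)).
  { replace l with (RiemannInt pr - (RiemannInt pr - l)) at 1 by ring. apply Rabs_triang_inv2 || idtac.
    eapply Rle_trans. apply Rabs_triang. rewrite Rabs_Ropp. lra. }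
  lra.
Qed.

Lemma imp_exist f p P : continuity f -> prim P p -> (forall x, Rabs (f x) <= p x) ->
  (forall e, 0 < e -> exists M0, forall M M', M0 <= M -> M <= M' ->
      (P M' - P M) + (P (-M) - P (-M')) < e) ->
  exists l, improper_integral f l.
Proof.
  intros Hc HP Hfp HT.
  set (S := fun M => RiemannInt (cont_int f (-M) M Hc)).
  assert (Key : forall M M', 0 <= M -> M <= M' ->
     Rabs (S M' - S M) <= (P M' - P M) + (P (-M) - P (-M'))).
  { intros M M' H0 H1. unfold S.
    assert (E1 := RiemannInt_P26 (cont_int f (-M') (-M) Hc) (cont_int f (-M) M Hc) (cont_int f (-M') M Hc)).
    assert (E2 := RiemannInt_P26 (cont_int f (-M') M Hc) (cont_int f M M' Hc) (cont_int f (-M') M' Hc)).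
    replace (RiemannInt (cont_int f (- M') M' Hc) - RiemannInt (cont_int f (- M) M Hc))
      with (RiemannInt (cont_int f M M' Hc) + RiemannInt (cont_int f (-M') (-M) Hc)) by lra.
    eapply Rle_trans. apply Rabs_triang.
    apply Rplus_le_compat.
    - rewrite <- (ftc P p HP M M' (cont_int p M M' (proj2 HP))).
      apply int_abs_le2; auto.
    - rewrite <- (ftc P p HP (-M') (-M) (cont_int p _ _ (proj2 HP))).
      apply int_abs_le2; auto. lra. }
  set (u := fun n => S (INR n)).
  assert (Hcau : Cauchy_crit u).
  { intros e he. destruct (HT e he) as [M0 HM0].
    destruct (INR_unbounded (Rmax M0 0)) as [N HN].
    exists N. intros n m Hn Hm. unfold R_dist, u.
    assert (HNn : INR N <= INR n) by (apply le_INR; lia).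
    assert (HNm : INR N <= INR m) by (apply le_INR; lia).
    assert (H0 : M0 <= INR N /\ 0 <= INR N) by (pose proof (Rmax_l M0 0); pose proof (Rmax_r M0 0); split; lra).
    destruct (Rle_dec (INR n) (INR m)).
    - rewrite <- Rabs_Ropp. replace (- (S (INR n) - S (INR m))) with (S (INR m) - S (INR n)) by ring.
      eapply Rle_lt_trans. apply Key; lra. apply HM0; lra.
    - eapply Rle_lt_trans. apply Key; lra. apply HM0; lra. }
  destruct (R_complete u Hcau) as [l Hl].
  exists l. split.
  - intro M. constructor. apply cont_int; auto.
  - intros e he.
    assert (he2 : 0 < e/2) by lra.
    destruct (HT _ he2) as [M0 HM0].
    destruct (Hl _ he2) as [N1 HN1].
    exists (Rmax M0 0). intros M HM pr.
    destruct (INR_unbounded M) as [n0 Hn0].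
    set (n := max n0 N1).
    assert (Hn : M <= INR n) by (assert (INR n0 <= INR n) by (apply le_INR; lia); lra).
    assert (H0 : M0 <= M /\ 0 <= M) by (pose proof (Rmax_l M0 0); pose proof (Rmax_r M0 0); split; lra).
    assert (A := Key M (INR n) (proj2 H0) Hn).
    assert (B := HM0 M (INR n) (proj1 H0) Hn).
    assert (C := HN1 n (Nat.le_max_r _ _)). unfold R_dist, u in C.
    rewrite (RiemannInt_P5 pr (cont_int f (-M) M Hc)). fold (S M).
    replace (S M - l) with (- (S (INR n) - S M) + (S (INR n) - l)) by ring.
    eapply Rle_lt_trans. apply Rabs_triang. rewrite Rabs_Ropp. lra.
Qed.

Lemma exple x y : x <= y -> exp x <= exp y.
Proof. intros [H|H]; [left; apply exp_increasing; auto| subst; lra]. Qed.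

Lemma exp_small K beta e : 0 <= K -> 0 < beta -> 0 < e ->
  exists X, forall x, X <= x -> K * exp (- (beta * x)) < e.
Proof.
  intros HK Hb He.
  exists (ln ((K + 1) / e) / beta). intros x Hx.
  assert (H1 : exp (- (beta * x)) <= e / (K + 1)).
  { replace (e / (K+1)) with (exp (- ln ((K+1)/e))).
    - apply exple. apply Ropp_le_contravar.
      apply (Rmult_le_compat_l beta) in Hx; [|lra].
      replace (beta * (ln ((K + 1) / e) / beta)) with (ln ((K + 1) / e)) in Hx by (field; lra). lra.
    - rewrite exp_Ropp, exp_ln. field. split; lra. apply Rdiv_lt_0_compat; lra. }
  assert (0 < exp (- (beta * x))) by apply exp_pos.
  apply Rle_lt_trans with (K * (e / (K+1))). apply Rmult_le_compat_l; lra.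
  replace (K * (e / (K + 1))) with (e * (K / (K+1))) by (field; lra).
  assert (K / (K+1) < 1). { apply (Rmult_lt_reg_r (K+1)). lra. unfold Rdiv. rewrite Rmult_assoc, Rinv_l; lra. }
  nra.
Qed.

Lemma ddeq f x a b : derivable_pt_lim f x a -> a = b -> derivable_pt_lim f x b.
Proof. intros H ->; auto. Qed.
Lemma ddplus f g x a b : derivable_pt_lim f x a -> derivable_pt_lim g x b ->
  derivable_pt_lim (fun y => f y + g y) x (a+b).
Proof. intros; apply (derivable_pt_lim_plus f g); auto. Qed.
Lemma ddminus f g x a b : derivable_pt_lim f x a -> derivable_pt_lim g x b ->
  derivable_pt_lim (fun y => f y - g y) x (a-b).
Proof. intros; apply (derivable_pt_lim_minus f g); auto. Qed.
Lemma ddmult f g x a b : derivable_pt_lim f x a -> derivable_pt_lim g x b ->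
  derivable_pt_lim (fun y => f y * g y) x (a * g x + f x * b).
Proof. intros; apply (derivable_pt_lim_mult f g); auto. Qed.
Lemma ddconst c x : derivable_pt_lim (fun _ => c) x 0.
Proof. apply (derivable_pt_lim_const c). Qed.
Lemma ddid x : derivable_pt_lim (fun y => y) x 1.
Proof. apply derivable_pt_lim_id. Qed.
Lemma ddscal c f x a : derivable_pt_lim f x a -> derivable_pt_lim (fun y => c * f y) x (c * a).
Proof. intros. apply (ddeq _ _ (0 * f x + c * a)). apply (ddmult (fun _ => c) f); auto. apply ddconst. ring. Qed.
Lemma ddcomp f g x a b : derivable_pt_lim f x a -> derivable_pt_lim g (f x) b ->
  derivable_pt_lim (fun y => g (f y)) x (b * a).
Proof. intros. apply (derivable_pt_lim_comp f g); auto. Qed.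
Lemma dddiv f g x a b : derivable_pt_lim f x a -> derivable_pt_lim g x b -> g x <> 0 ->
  derivable_pt_lim (fun y => f y / g y) x ((a * g x - b * f x) / (g x)^2).
Proof. intros. apply (ddeq _ _ ((a * g x - b * f x) / Rsqr (g x))).
  apply (derivable_pt_lim_div f g); auto. f_equal. unfold Rsqr; simpl; ring. Qed.
Lemma ddinv g x b : derivable_pt_lim g x b -> g x <> 0 ->
  derivable_pt_lim (fun y => / g y) x (- b / (g x)^2).
Proof. intros. apply (derivable_pt_lim_ext (fun y => 1 / g y)). intros; unfold Rdiv; ring.
  apply (ddeq _ _ ((0 * g x - b * 1) / (g x)^2)). apply (dddiv (fun _ => 1)); auto. apply ddconst.
  field. auto. Qed.
Lemma ddpow2 f x a : derivable_pt_lim f x a -> derivable_pt_lim (fun y => (f y)^2) x (2 * f x * a).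
Proof. intros. apply (derivable_pt_lim_ext (fun y => f y * f y)). intros; ring.
  apply (ddeq _ _ (a * f x + f x * a)). apply ddmult; auto. ring. Qed.
Lemma ddlinp k s x : derivable_pt_lim (fun y => k * (y + s)) x k.
Proof. apply (ddeq _ _ (k * (1 + 0))). apply ddscal. apply ddplus. apply ddid. apply ddconst. ring. Qed.
Lemma ddlinm k s x : derivable_pt_lim (fun y => k * (y - s)) x k.
Proof. apply (ddeq _ _ (k * (1 - 0))). apply ddscal. apply ddminus. apply ddid. apply ddconst. ring. Qed.

Lemma cosh_exp z : cosh z = (exp z + / exp z) / 2.
Proof. unfold cosh. rewrite exp_Ropp. auto. Qed.
Lemma sinh_exp z : sinh z = (exp z - / exp z) / 2.
Proof. unfold sinh. rewrite exp_Ropp. auto. Qed.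
Lemma cosh_pos z : 0 < cosh z.
Proof. unfold cosh. pose proof (exp_pos z); pose proof (exp_pos (-z)). lra. Qed.
Lemma cosh_ge1 z : 1 <= cosh z.
Proof. rewrite cosh_exp. pose proof (exp_pos z). set (u := exp z) in *.
  apply (Rmult_le_reg_r (2*u)). lra. field_simplify. 2: lra. 
  replace (u^2+1) with ((u-1)^2 + 2*u) by ring. pose proof (pow2_ge_0 (u-1)). lra. Qed.
Lemma cosh_sinh z : cosh z ^ 2 - sinh z ^ 2 = 1.
Proof. rewrite cosh_exp, sinh_exp. pose proof (exp_pos z). field. lra. Qed.
Lemma tanh_eq z : tanh z = sinh z / cosh z.
Proof. reflexivity. Qed.
Lemma tanh_bound z : Rabs (tanh z) <= 1.
Proof. unfold tanh. pose proof (cosh_sinh z). pose proof (cosh_pos z).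
  assert (- cosh z <= sinh z <= cosh z) by nra.
  apply Rabs_le. split.
  - apply (Rmult_le_reg_r (cosh z)); auto. unfold Rdiv; rewrite Rmult_assoc, Rinv_l by lra. lra.
  - apply (Rmult_le_reg_r (cosh z)); auto. unfold Rdiv; rewrite Rmult_assoc, Rinv_l by lra. lra.
Qed.
Lemma sech_pos z : 0 < sech z.
Proof. unfold sech. apply Rinv_0_lt_compat, cosh_pos. Qed.
Lemma sech_le1 z : sech z <= 1.
Proof. unfold sech. pose proof (cosh_ge1 z). rewrite <- Rinv_1. apply Rinv_le_contravar; lra. Qed.

Lemma ddcosh f x a : derivable_pt_lim f x a -> derivable_pt_lim (fun y => cosh (f y)) x (sinh (f x) * a).
Proof. intros. apply (ddcomp f cosh); auto. apply derivable_pt_lim_cosh. Qed.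
Lemma ddsinh f x a : derivable_pt_lim f x a -> derivable_pt_lim (fun y => sinh (f y)) x (cosh (f x) * a).
Proof. intros. apply (ddcomp f sinh); auto. apply derivable_pt_lim_sinh. Qed.
Lemma ddtanh f x a : derivable_pt_lim f x a -> derivable_pt_lim (fun y => tanh (f y)) x (a / cosh (f x) ^ 2).
Proof. intros. unfold tanh. pose proof (cosh_pos (f x)). pose proof (cosh_sinh (f x)).
  eapply ddeq. apply (dddiv (fun y => sinh (f y)) (fun y => cosh (f y))).
  apply ddsinh, H. apply ddcosh, H. lra.
  replace ((cosh (f x) * a * cosh (f x) - sinh (f x) * a * sinh (f x)))
    with (a * (cosh (f x) ^ 2 - sinh (f x) ^ 2)) by ring.
  rewrite H1. field. lra. Qed.
Lemma ddlncosh f x a : derivable_pt_lim f x a -> derivable_pt_lim (fun y => ln (cosh (f y))) x (a * tanh (f x)).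
Proof. intros. pose proof (cosh_pos (f x)). eapply ddeq. apply (ddcomp (fun y => cosh (f y)) ln).
  apply ddcosh; eauto. apply derivable_pt_lim_ln; auto. unfold tanh. field. lra. Qed.
Lemma ddatansinh f x a : derivable_pt_lim f x a -> derivable_pt_lim (fun y => atan (sinh (f y))) x (a * sech (f x)).
Proof. intros. pose proof (cosh_pos (f x)). pose proof (cosh_sinh (f x)). eapply ddeq. apply (ddcomp (fun y => sinh (f y)) atan).
  apply ddsinh; eauto. apply derivable_pt_lim_atan. unfold sech.
  replace (1 + sinh (f x) ^ 2) with (cosh (f x) ^ 2) by lra. field. lra. Qed.
Lemma ddsech f x a : derivable_pt_lim f x a -> derivable_pt_lim (fun y => sech (f y)) x (- a * sinh (f x) / cosh (f x) ^ 2).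
Proof. intros. pose proof (cosh_pos (f x)). unfold sech. eapply ddeq. apply (ddinv (fun y => cosh (f y))).
  apply ddcosh; eauto. lra. field. lra. Qed.

Lemma Cfromd f f' : (forall x, derivable_pt_lim f x (f' x)) -> continuity f.
Proof. intros H x. apply derivable_continuous_pt. exists (f' x). apply H. Qed.
Lemma Cplus f g : continuity f -> continuity g -> continuity (fun y => f y + g y).
Proof. intros; apply (continuity_plus f g); auto. Qed.
Lemma Cminus f g : continuity f -> continuity g -> continuity (fun y => f y - g y).
Proof. intros; apply (continuity_minus f g); auto. Qed.
Lemma Cmult f g : continuity f -> continuity g -> continuity (fun y => f y * g y).
Proof. intros; apply (continuity_mult f g); auto. Qed.
Lemma Cconst c : continuity (fun _ => c).
Proof. apply continuity_const. intros x y; auto. Qed.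
Lemma Cid : continuity (fun y => y).
Proof. apply derivable_continuous, derivable_id. Qed.
Lemma Ccomp f g : continuity f -> continuity g -> continuity (fun y => g (f y)).
Proof. intros Hf Hg x. apply (continuity_pt_comp f g); auto. Qed.
Lemma Cinv f : continuity f -> (forall x, f x <> 0) -> continuity (fun y => / f y).
Proof. intros. apply (continuity_inv f); auto. Qed.
Lemma Ccosh : continuity cosh.
Proof. apply derivable_continuous, derivable_cosh. Qed.
Lemma Csinh : continuity sinh.
Proof. apply derivable_continuous, derivable_sinh. Qed.
Lemma Ctanh : continuity tanh.
Proof. apply (Cfromd _ (fun y => 1 / cosh y ^ 2)). intro x. apply (ddtanh (fun y => y)). apply ddid. Qed.
Lemma Csech : continuity sech.
Proof. apply Cinv. apply Ccosh. intro x; pose proof (cosh_pos x); lra. Qed.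
Lemma Cpow2 f : continuity f -> continuity (fun y => f y ^ 2).
Proof. intros. simpl. apply Cmult; auto. apply Cmult; auto. apply Cconst. Qed.
Lemma Clin k s : continuity (fun y => k * (y + s)).
Proof. apply Cmult. apply Cconst. apply Cplus. apply Cid. apply Cconst. Qed.
Lemma Clinm k s : continuity (fun y => k * (y - s)).
Proof. apply Cmult. apply Cconst. apply Cminus. apply Cid. apply Cconst. Qed.
Lemma dddivc f c x a : derivable_pt_lim f x a -> derivable_pt_lim (fun y => f y / c) x (a / c).
Proof. intros. apply (derivable_pt_lim_ext (fun y => /c * f y)). intros; unfold Rdiv; ring.
  eapply ddeq. apply ddscal; eauto. unfold Rdiv; ring. Qed.
Lemma ddopp f x a : derivable_pt_lim f x a -> derivable_pt_lim (fun y => - f y) x (- a).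
Proof. intros. apply (derivable_pt_lim_ext (fun y => -1 * f y)). intros; ring.
  eapply ddeq. apply ddscal; eauto. ring. Qed.

Definition mfun k a x := tanh (k*(x+a)) * (sech (k*(x-a)))^2 - tanh (k*(x-a)) * (sech (k*(x+a)))^2.
Definition gfun k a x := (sech (k*(x+a)))^2 * (sech (k*(x-a)))^2.
Definition Lz k a x := ln (cosh (k*(x+a))) - ln (cosh (k*(x-a))).
Definition Tz k a x := tanh (k*(x+a)) + tanh (k*(x-a)).
Definition chc k a := cosh (2*k*a).
Definition shc k a := sinh (2*k*a).
Definition Gz k a x := 2/(k*shc k a^2) * (chc k a/shc k a * Lz k a x - Tz k a x/2).
Definition A1z k a x := 2/k * (- Lz k a x / shc k a^2 + chc k a/shc k a * Tz k a x / 2).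

Lemma expz k a x : exp (k*(x+a)) = exp (2*k*a) * exp (k*(x-a)).
Proof. rewrite <- exp_plus. f_equal. ring. Qed.

Lemma E_gt1 k a : 0 < k -> 0 < a -> 1 < exp (2*k*a).
Proof. intros. rewrite <- exp_0. apply exp_increasing. nra. Qed.

Lemma dLz k a x : derivable_pt_lim (Lz k a) x (k * tanh (k*(x+a)) - k * tanh (k*(x-a))).
Proof. unfold Lz. apply (ddminus (fun y => ln (cosh (k*(y+a)))) (fun y => ln (cosh (k*(y-a))))).
  apply (ddlncosh (fun y => k*(y+a))), ddlinp. apply (ddlncosh (fun y => k*(y-a))), ddlinm. Qed.

Lemma dTz k a x : derivable_pt_lim (Tz k a) x (k / cosh (k*(x+a))^2 + k / cosh (k*(x-a))^2).
Proof. unfold Tz. apply (ddplus (fun y => tanh (k*(y+a))) (fun y => tanh (k*(y-a)))).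
  apply (ddtanh (fun y => k*(y+a))), ddlinp. apply (ddtanh (fun y => k*(y-a))), ddlinm. Qed.

Ltac toexp := unfold tanh, sech, chc, shc in *; rewrite ?cosh_exp, ?sinh_exp in *.

Lemma dGz k a x : 0 < k -> 0 < a -> derivable_pt_lim (Gz k a) x (gfun k a x).
Proof. intros Hk Ha. unfold Gz.
  eapply ddeq. apply ddscal. apply ddminus. apply ddscal. apply dLz.
  apply (dddivc (Tz k a)). apply dTz.
  unfold gfun. toexp. rewrite !expz. pose proof (E_gt1 k a Hk Ha).
  pose proof (exp_pos (k*(x-a))).
  set (E := exp (2*k*a)) in *. set (v := exp (k*(x-a))) in *.
  field. repeat split; try lra; nra.
Qed.

Lemma dA1z k a x : 0 < k -> 0 < a -> derivable_pt_lim (A1z k a) x (mfun k a x).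
Proof. intros Hk Ha. unfold A1z.
  eapply ddeq. apply ddscal. apply ddplus.
  apply (dddivc (fun y => - Lz k a y)). apply ddopp. apply dLz.
  apply (dddivc (fun y => chc k a / shc k a * Tz k a y)). apply ddscal. apply dTz.
  unfold mfun. toexp. rewrite !expz. pose proof (E_gt1 k a Hk Ha).
  pose proof (exp_pos (k*(x-a))).
  set (E := exp (2*k*a)) in *. set (v := exp (k*(x-a))) in *.
  field. repeat split; try lra; nra.
Qed.

Lemma cosh_even z : cosh (- z) = cosh z.
Proof. unfold cosh. rewrite Ropp_involutive. field. Qed.
Lemma sinh_odd z : sinh (- z) = - sinh z.
Proof. unfold sinh. rewrite Ropp_involutive. field. Qed.
Lemma tanh_odd z : tanh (- z) = - tanh z.
Proof. unfold tanh. rewrite cosh_even, sinh_odd. field. pose proof (cosh_pos z); lra. Qed.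

Lemma Lz_odd k a x : Lz k a (- x) = - Lz k a x.
Proof. unfold Lz. replace (k * (- x + a)) with (- (k*(x-a))) by ring.
  replace (k * (- x - a)) with (- (k*(x+a))) by ring. rewrite !cosh_even. ring. Qed.
Lemma Tz_odd k a x : Tz k a (- x) = - Tz k a x.
Proof. unfold Tz. replace (k * (- x + a)) with (- (k*(x-a))) by ring.
  replace (k * (- x - a)) with (- (k*(x+a))) by ring. rewrite !tanh_odd. ring. Qed.
Lemma Tz_bound k a x : Rabs (Tz k a x) <= 2.
Proof. unfold Tz. eapply Rle_trans. apply Rabs_triang. pose proof (tanh_bound (k*(x+a))).
  pose proof (tanh_bound (k*(x-a))). lra. Qed.

Lemma ln_ge0 r : 1 <= r -> 0 <= ln r.
Proof. intros [H|H]. left. rewrite <- ln_1. apply ln_increasing; lra. subst; rewrite ln_1; lra. Qed.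
Lemma ln_le_m1 r : 0 < r -> ln r <= r - 1.
Proof. intros. pose proof (exp_ineq1_le (ln r)). rewrite exp_ln in H0; lra. Qed.

Lemma one_m_tanh z : 1 - tanh z = 2 / (exp z ^ 2 + 1).
Proof. unfold tanh. rewrite cosh_exp, sinh_exp. pose proof (exp_pos z). field. split; nra. Qed.

Lemma exp_m2 k a x : exp (- (2 * (k * (x - a)))) = / exp (k*(x-a)) ^ 2.
Proof. rewrite exp_Ropp. f_equal. simpl. rewrite Rmult_1_r, <- exp_plus. f_equal; ring. Qed.

Lemma Lz_lim k a x : 0 < k -> 0 < a -> a <= x ->
  0 <= 2*k*a - Lz k a x <= exp (- (2 * (k*(x-a)))).
Proof. intros Hk Ha Hx. rewrite exp_m2.
  pose proof (E_gt1 k a Hk Ha).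
  assert (Hv : 1 <= exp (k*(x-a))).
  { rewrite <- exp_0. apply exple. nra. }
  unfold Lz. rewrite !cosh_exp, expz.
  replace (2*k*a) with (ln (exp (2*k*a))) by apply ln_exp.
  set (E := exp (2*k*a)) in *. set (v := exp (k*(x-a))) in *.
  assert (Hr : ln E - (ln ((E * v + / (E * v)) / 2) - ln ((v + / v) / 2)) =
     ln (E^2 * (v^2+1) / (E^2 * v^2 + 1))).
  { assert (HX : 0 < (E * v + / (E * v)) / 2).
    { apply Rdiv_lt_0_compat; [|lra]. assert (0 < / (E*v)) by (apply Rinv_0_lt_compat; nra). nra. }
    assert (HY : 0 < (v + / v) / 2).
    { apply Rdiv_lt_0_compat; [|lra]. assert (0 < / v) by (apply Rinv_0_lt_compat; nra). nra. }
    replace (E ^ 2 * (v ^ 2 + 1) / (E ^ 2 * v ^ 2 + 1)) with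
      (E * ((v + / v) / 2) * / ((E * v + / (E * v)) / 2)) by (field; repeat split; nra).
    rewrite ln_mult, ln_mult, ln_Rinv; try lra. apply Rmult_lt_0_compat; lra.
    apply Rinv_0_lt_compat; lra. }
  rewrite exp_ln by lra. rewrite Hr. split.
  - apply ln_ge0. apply (Rmult_le_reg_r (E^2*v^2+1)). nra.
    unfold Rdiv. rewrite Rmult_assoc, Rinv_l by nra. nra.
  - eapply Rle_trans. apply ln_le_m1. apply Rdiv_lt_0_compat; nra.
    replace (E ^ 2 * (v ^ 2 + 1) / (E ^ 2 * v ^ 2 + 1) - 1) with ((E^2 - 1) / (E^2*v^2+1)) by (field; nra).
    apply (Rmult_le_reg_r ((E^2*v^2+1) * v^2)). nra.
    replace ((E ^ 2 - 1) / (E ^ 2 * v ^ 2 + 1) * ((E ^ 2 * v ^ 2 + 1) * v ^ 2)) with ((E^2-1)*v^2) by (field; nra).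
    replace (/ v ^ 2 * ((E ^ 2 * v ^ 2 + 1) * v ^ 2)) with (E^2*v^2+1) by (field; nra). nra.
Qed.

Lemma Tz_lim k a x : 0 < k -> 0 < a -> a <= x ->
  0 <= 2 - Tz k a x <= 4 * exp (- (2 * (k*(x-a)))).
Proof. intros Hk Ha Hx. rewrite exp_m2.
  pose proof (E_gt1 k a Hk Ha).
  assert (Hv : 1 <= exp (k*(x-a))).
  { rewrite <- exp_0. apply exple. nra. }
  unfold Tz. replace (2 - (tanh (k * (x + a)) + tanh (k * (x - a)))) with
    ((1 - tanh (k * (x + a))) + (1 - tanh (k * (x - a)))) by ring.
  rewrite !one_m_tanh, expz.
  set (E := exp (2*k*a)) in *. set (v := exp (k*(x-a))) in *.
  assert (0 < 2 / ((E*v)^2+1)) by (apply Rdiv_lt_0_compat; nra).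
  assert (0 < 2 / (v^2+1)) by (apply Rdiv_lt_0_compat; nra).
  assert (2 / ((E*v)^2+1) <= 2 / v^2).
  { apply (Rmult_le_reg_r (((E*v)^2+1)*v^2)). nra.
    replace (2 / ((E * v) ^ 2 + 1) * (((E * v) ^ 2 + 1) * v ^ 2)) with (2*v^2) by (field; nra).
    replace (2 / v ^ 2 * (((E * v) ^ 2 + 1) * v ^ 2)) with (2 * ((E*v)^2+1)) by (field; nra). assert (v <= E*v) by nra. nra. }
  assert (2 / (v^2+1) <= 2 / v^2).
  { apply (Rmult_le_reg_r ((v^2+1)*v^2)). nra.
    replace (2 / (v ^ 2 + 1) * ((v ^ 2 + 1) * v ^ 2)) with (2*v^2) by (field; nra).
    replace (2 / v ^ 2 * ((v ^ 2 + 1) * v ^ 2)) with (2 * (v^2+1)) by (field; nra). nra. }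
  replace (4 * / v^2) with (2/v^2 + 2/v^2) by (field; nra). lra.
Qed.

Lemma cosh_abs z : cosh z = cosh (Rabs z).
Proof. destruct (Rle_dec 0 z). rewrite Rabs_pos_eq; auto. rewrite Rabs_left by lra. rewrite cosh_even; auto. Qed.
Lemma cosh_ge_exp t : exp t / 2 <= cosh t.
Proof. unfold cosh. pose proof (exp_pos (-t)). lra. Qed.
Lemma exp_sq t : 0 <= t -> (1 + t/2)^2 <= exp t.
Proof. intros. replace (exp t) with (exp (t/2) ^ 2). pose proof (exp_ineq1_le (t/2)).
  apply pow_incr. lra. simpl. rewrite Rmult_1_r, <- exp_plus. f_equal; field. Qed.
Lemma exp_4 t : 0 <= t -> 3 * t^2 / 8 <= exp t.
Proof. intros. replace (exp t) with (exp (t/4) ^ 4). pose proof (exp_ineq1_le (t/4)).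
  assert ((1 + t/4)^4 <= exp (t/4) ^ 4) by (apply pow_incr; lra). nra.
  simpl. rewrite Rmult_1_r, <- !exp_plus. f_equal; field. Qed.
Lemma abs_le_cosh z : Rabs z <= cosh z.
Proof. rewrite cosh_abs. pose proof (Rabs_pos z). set (t := Rabs z) in *.
  pose proof (exp_sq t H). pose proof (cosh_ge_exp t). pose proof (pow2_ge_0 (1 - t/2)).
  assert ((1 + t/2)^2 = 1 + t + t^2/4) by field. assert ((1-t/2)^2 = 1 - t + t^2/4) by field. lra. Qed.
Lemma sq_le_cosh z : z^2 <= 6 * cosh z.
Proof. rewrite cosh_abs. replace (z^2) with (Rabs z ^2) by (rewrite <- Rsqr_pow2, <- Rsqr_abs, Rsqr_pow2; auto).
  pose proof (Rabs_pos z). set (t := Rabs z) in *.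
  pose proof (exp_4 t H). pose proof (cosh_ge_exp t). nra. Qed.

Lemma mfun_bound k a x : Rabs (mfun k a x) <= sech (k*(x+a)) ^2 + sech (k*(x-a)) ^2.
Proof. unfold mfun. eapply Rle_trans. apply Rabs_triang. rewrite Rabs_Ropp, !Rabs_mult.
  rewrite !(Rabs_pos_eq (sech _ ^2)) by (apply pow2_ge_0).
  pose proof (tanh_bound (k*(x+a))). pose proof (tanh_bound (k*(x-a))).
  pose proof (pow2_ge_0 (sech (k*(x+a)))). pose proof (pow2_ge_0 (sech (k*(x-a)))). nra. Qed.

Lemma sq_sech_bound k a s x : 0 < k -> s^2 = a^2 -> 0 <= a ->
  Rabs (x^2 - a^2) * sech (k*(x+s)) ^ 2 <= (6/k^2 + 2*a/k) * sech (k*(x+s)).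
Proof. intros Hk Hs Ha. set (z := k*(x+s)).
  assert (E : x^2 - a^2 = (z/k) * (z/k - 2*s)) by (unfold z; rewrite <- Hs; field; lra).
  assert (Hsa : Rabs s = a). { rewrite <- (Rabs_pos_eq a) by lra. rewrite <- !sqrt_Rsqr_abs. f_equal. unfold Rsqr; nra. }
  assert (B1 : Rabs (x^2 - a^2) <= z^2/k^2 + 2*a*Rabs z/k).
  { rewrite E, Rabs_mult.
    assert (Hik : 0 < / k) by (apply Rinv_0_lt_compat; lra).
    assert (A1 : Rabs (z / k) = Rabs z * / k) by (unfold Rdiv; rewrite Rabs_mult, (Rabs_pos_eq (/k)); lra).
    assert (A2 : Rabs (z / k - 2 * s) <= Rabs z * / k + 2 * a).
    { eapply Rle_trans. apply Rabs_triang. rewrite Rabs_Ropp, A1, Rabs_mult, Hsa, (Rabs_pos_eq 2); lra. }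
    rewrite A1. pose proof (Rabs_pos z). pose proof (Rabs_pos (z / k - 2 * s)).
    eapply Rle_trans. apply Rmult_le_compat_l. nra. apply A2.
    replace (z^2) with (Rabs z ^2) by (rewrite <- Rsqr_pow2, <- Rsqr_abs, Rsqr_pow2; auto).
    right. field. lra. }
  pose proof (sech_pos z). pose proof (cosh_pos z).
  assert (C1 : z^2 * sech z ^2 <= 6 * sech z).
  { pose proof (sq_le_cosh z). unfold sech in *. 
    replace (z^2 * (/cosh z)^2) with (z^2 / cosh z * / cosh z) by (field; lra).
    apply Rmult_le_compat_r. lra. apply (Rmult_le_reg_r (cosh z)). lra. unfold Rdiv. rewrite Rmult_assoc, Rinv_l; lra. }
  assert (C2 : Rabs z * sech z ^2 <= sech z).
  { pose proof (abs_le_cosh z). unfold sech in *.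
    replace (Rabs z * (/cosh z)^2) with (Rabs z / cosh z * / cosh z) by (field; lra).
    rewrite <- (Rmult_1_l (/ cosh z)) at 2.
    apply Rmult_le_compat_r. lra. apply (Rmult_le_reg_r (cosh z)). lra. unfold Rdiv. rewrite Rmult_assoc, Rinv_l; lra. }
  pose proof (pow2_ge_0 (sech z)).
  eapply Rle_trans. apply Rmult_le_compat_r. auto. apply B1.
  replace ((z ^ 2 / k ^ 2 + 2 * a * Rabs z / k) * sech z ^ 2) with
     ((z^2 * sech z^2)/k^2 + (2*a/k) * (Rabs z * sech z ^2)) by (field; lra).
  replace ((6 / k ^ 2 + 2 * a / k) * sech z) with (6 * sech z / k^2 + (2*a/k) * sech z) by (field; lra).
  apply Rplus_le_compat. unfold Rdiv; apply Rmult_le_compat_r. left; apply Rinv_0_lt_compat; nra. auto.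
  apply Rmult_le_compat_l. unfold Rdiv. apply Rmult_le_pos. lra. left; apply Rinv_0_lt_compat; lra. auto.
Qed.

Lemma Rabs_le_inv x a : Rabs x <= a -> - a <= x <= a.
Proof. intros. unfold Rabs in H. destruct (Rcase_abs x); lra. Qed.

Definition pd k a d b x := d * (sech (k*(x+a))^2 + sech (k*(x-a))^2) + b * (sech (k*(x+a)) + sech (k*(x-a))).
Definition Pd k a d b x := d/k * Tz k a x + b/k * (atan (sinh (k*(x+a))) + atan (sinh (k*(x-a)))).

Lemma Csech_lin k s : continuity (fun y => sech (k*(y+s))).
Proof. apply (Ccomp (fun y => k*(y+s)) sech). apply Clin. apply Csech. Qed.
Lemma Csech_linm k s : continuity (fun y => sech (k*(y-s))).
Proof. apply (Ccomp (fun y => k*(y-s)) sech). apply Clinm. apply Csech. Qed.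
Lemma Ctanh_lin k s : continuity (fun y => tanh (k*(y+s))).
Proof. apply (Ccomp (fun y => k*(y+s)) tanh). apply Clin. apply Ctanh. Qed.
Lemma Ctanh_linm k s : continuity (fun y => tanh (k*(y-s))).
Proof. apply (Ccomp (fun y => k*(y-s)) tanh). apply Clinm. apply Ctanh. Qed.

Lemma Cpd k a d b : continuity (pd k a d b).
Proof. unfold pd. apply Cplus; apply Cmult; try apply Cconst; apply Cplus;
  try apply Cpow2; first [apply Csech_lin | apply Csech_linm]. Qed.

Lemma prim_Pd k a d b : 0 < k -> prim (Pd k a d b) (pd k a d b).
Proof. intros Hk. split; [|apply Cpd]. intro x. unfold Pd, pd.
  eapply ddeq. apply ddplus. apply ddscal. apply dTz. apply ddscal. apply ddplus.
  apply (ddatansinh (fun y => k*(y+a))), ddlinp. apply (ddatansinh (fun y => k*(y-a))), ddlinm.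
  unfold sech. pose proof (cosh_pos (k*(x+a))). pose proof (cosh_pos (k*(x-a))). field. lra. Qed.

Lemma atan_sinh_odd z : atan (sinh (- z)) = - atan (sinh z).
Proof. rewrite sinh_odd, atan_opp. auto. Qed.

Lemma Pd_odd k a d b x : Pd k a d b (- x) = - Pd k a d b x.
Proof. unfold Pd. rewrite Tz_odd. replace (k * (- x + a)) with (- (k*(x-a))) by ring.
  replace (k * (- x - a)) with (- (k*(x+a))) by ring. rewrite !atan_sinh_odd. ring. Qed.

Lemma Pd_bound k a d b M : 0 < k -> 0 <= d -> 0 <= b -> Pd k a d b M - Pd k a d b (- M) <= 4*d/k + 2*PI*b/k.
Proof. intros Hk Hd Hb. rewrite Pd_odd. unfold Pd.
  pose proof (Tz_bound k a M). apply Rabs_le_inv in H.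
  pose proof (atan_bound (sinh (k*(M+a)))). pose proof (atan_bound (sinh (k*(M-a)))).
  assert (0 <= d/k) by (unfold Rdiv; apply Rmult_le_pos; [lra| left; apply Rinv_0_lt_compat; lra]).
  assert (0 <= b/k) by (unfold Rdiv; apply Rmult_le_pos; [lra| left; apply Rinv_0_lt_compat; lra]).
  replace (4*d/k) with (d/k * 4) by (field; lra). replace (2*PI*b/k) with (b/k * (2*PI)) by (field; lra).
  assert (d / k * Tz k a M <= d/k * 2) by (apply Rmult_le_compat_l; lra).
  assert (b / k * (atan (sinh (k * (M + a))) + atan (sinh (k * (M - a)))) <= b/k * PI) by (apply Rmult_le_compat_l; lra).
  lra. Qed.

Lemma Pd_tail k a d M M' : 0 < k -> 0 < a -> 0 <= d -> a <= M -> M <= M' ->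
  (Pd k a d 0 M' - Pd k a d 0 M) + (Pd k a d 0 (-M) - Pd k a d 0 (-M')) <=
  8*d/k * exp (- (2 * (k*(M-a)))).
Proof. intros Hk Ha Hd HM HM'. rewrite !Pd_odd. unfold Pd.
  pose proof (Tz_lim k a M Hk Ha HM). pose proof (Tz_lim k a M' Hk Ha ltac:(lra)).
  assert (0 <= d/k) by (unfold Rdiv; apply Rmult_le_pos; [lra| left; apply Rinv_0_lt_compat; lra]).
  replace (d / k * Tz k a M' + 0 / k * (atan (sinh (k * (M' + a))) + atan (sinh (k * (M' - a)))) -
  (d / k * Tz k a M + 0 / k * (atan (sinh (k * (M + a))) + atan (sinh (k * (M - a))))) +
  (- (d / k * Tz k a M + 0 / k * (atan (sinh (k * (M + a))) + atan (sinh (k * (M - a))))) -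
   - (d / k * Tz k a M' + 0 / k * (atan (sinh (k * (M' + a))) + atan (sinh (k * (M' - a)))))))
   with (2 * (d/k) * (Tz k a M' - Tz k a M)) by (field; lra).
  replace (8 * d / k * exp (- (2 * (k * (M - a))))) with (2 * (d/k) * (4 * exp (- (2 * (k * (M - a)))))) by (field; lra).
  apply Rmult_le_compat_l. lra. lra. Qed.

Lemma y2_bound c y : 2 <= c -> y^2 <= c^2 + 2 * c^2 * exp (- c) * cosh y.
Proof. intros Hc. rewrite cosh_abs. replace (y^2) with (Rabs y ^2) by (rewrite <- Rsqr_pow2, <- Rsqr_abs, Rsqr_pow2; auto).
  pose proof (Rabs_pos y). set (t := Rabs y) in *. pose proof (cosh_pos t). pose proof (exp_pos (-c)).
  destruct (Rle_dec t c).
  - assert (0 <= 2 * c^2 * exp (-c) * cosh t) by (pose proof (pow2_ge_0 c); apply Rmult_le_pos; [apply Rmult_le_pos; [apply Rmult_le_pos|]|]; lra). assert (t^2 <= c^2) by (apply pow_incr; lra). lra.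
  - set (d := t - c). assert (Hd : 0 <= d) by (unfold d; lra).
    pose proof (exp_sq d Hd) as Hsq.
    assert (Ht2 : t^2 <= c^2 * (1 + d/2)^2).
    { replace t with (c + d) by (unfold d; ring). apply (Rmult_le_reg_r 4). lra.
      replace (c ^ 2 * (1 + d / 2) ^ 2 * 4) with ((2*c + c*d)^2) by field.
      replace ((c+d)^2*4) with ((2*c+2*d)^2) by ring. apply pow_incr. nra. }
    assert (Hed : exp d = exp t * exp (- c)) by (rewrite <- exp_plus; f_equal; unfold d; ring).
    pose proof (cosh_ge_exp t) as Hce.
    pose proof (pow2_ge_0 c) as Hc2.
    assert (A1 : c^2 * (1 + d/2)^2 <= c^2 * (exp t * exp (-c))) by (rewrite <- Hed; apply Rmult_le_compat_l; lra).
    assert (A2 : exp t * exp (-c) <= 2 * cosh t * exp (-c)) by (apply Rmult_le_compat_r; lra).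
    assert (A3 : c^2 * (exp t * exp (-c)) <= c^2 * (2 * cosh t * exp (-c))) by (apply Rmult_le_compat_l; lra).
    assert (A4 : c^2 * (2 * cosh t * exp (-c)) = 2 * c^2 * exp (-c) * cosh t) by ring.
    lra.
Qed.

Definition q2 k a x := sech (k*(x+a)) * sech (k*(x-a)).

Lemma coshy_g k a x : cosh (2*k*x) * gfun k a x <= 2 * q2 k a x.
Proof. unfold gfun, q2, sech. rewrite !cosh_exp.
  replace (exp (2*k*x)) with (exp (k*(x+a)) * exp (k*(x-a))) by (rewrite <- exp_plus; f_equal; ring).
  pose proof (exp_pos (k*(x+a))). pose proof (exp_pos (k*(x-a))).
  set (u := exp (k*(x+a))) in *. set (v := exp (k*(x-a))) in *.
  apply (Rmult_le_reg_r ((u^2+1)^2*(v^2+1)^2/(u*v))).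
  apply Rdiv_lt_0_compat; [apply Rmult_lt_0_compat; apply pow_lt; nra | nra].
  replace ((u * v + / (u * v)) / 2 * ((/ ((u + / u) / 2)) ^ 2 * (/ ((v + / v) / 2)) ^ 2) *
   ((u ^ 2 + 1) ^ 2 * (v ^ 2 + 1) ^ 2 / (u * v))) with (8 * ((u*v)^2 + 1)) by (field; repeat split; nra).
  replace (2 * (/ ((u + / u) / 2) * / ((v + / v) / 2)) * ((u ^ 2 + 1) ^ 2 * (v ^ 2 + 1) ^ 2 / (u * v)))
    with (8 * (u^2+1)*(v^2+1)) by (field; repeat split; nra).
  nra. Qed.

Lemma x2_bound2 k a x : 0 < k -> 2 <= 2*k*a ->
  Rabs (x^2 - a^2) <= (2*k*a)^2/(2*k^2) + (2*k*a)^2 * exp (- (2*k*a)) / (2*k^2) * cosh (2*k*x).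
Proof. intros Hk Hc. set (c := 2*k*a) in *.
  assert (E : x^2 - a^2 = ((2*k*x)^2 - c^2)/(4*k^2)) by (unfold c; field; lra).
  pose proof (y2_bound c (2*k*x) Hc).
  pose proof (pow2_ge_0 (2*k*x)). pose proof (pow2_ge_0 c).
  rewrite E. unfold Rdiv at 1. rewrite Rabs_mult, (Rabs_pos_eq (/ (4*k^2))) by (left; apply Rinv_0_lt_compat; nra).
  apply (Rmult_le_reg_r (4*k^2)). nra. rewrite Rmult_assoc, Rinv_l by nra. rewrite Rmult_1_r.
  eapply Rle_trans. apply Rabs_triang. rewrite Rabs_Ropp, !Rabs_pos_eq by auto.
  replace (((c ^ 2 / (2 * k ^ 2) + c ^ 2 * exp (- c) / (2 * k ^ 2) * cosh (2 * k * x)) * (4 * k ^ 2)))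
    with (2*c^2 + 2 * c^2 * exp (-c) * cosh (2*k*x)) by (field; lra). lra. Qed.

Definition Lq k a x := / (k * shc k a) * Lz k a x.

Lemma prim_Lq k a : 0 < k -> 0 < a -> prim (Lq k a) (q2 k a).
Proof. intros Hk Ha. split.
  - intro x. unfold Lq. eapply ddeq. apply ddscal. apply dLz.
    unfold q2. toexp. rewrite !expz. pose proof (E_gt1 k a Hk Ha).
    pose proof (exp_pos (k*(x-a))).
    set (E := exp (2*k*a)) in *. set (v := exp (k*(x-a))) in *.
    field. repeat split; try lra; nra.
  - unfold q2. apply Cmult. apply Csech_lin. apply Csech_linm.
Qed.

Lemma shc_pos k a : 0 < k -> 0 < a -> 0 < shc k a.
Proof. intros. unfold shc. rewrite sinh_exp. pose proof (E_gt1 k a H H0).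
  set (E := exp (2*k*a)) in *. assert (/E < 1). { rewrite <- Rinv_1. apply Rinv_lt_contravar; lra. } lra. Qed.
Lemma chc_pos k a : 0 < chc k a.
Proof. apply cosh_pos. Qed.

Lemma Cmfun k a : continuity (mfun k a).
Proof. unfold mfun. apply Cminus; apply Cmult; try apply Cpow2;
  first [apply Ctanh_lin | apply Ctanh_linm | apply Csech_lin | apply Csech_linm]. Qed.
Lemma Cgfun k a : continuity (gfun k a).
Proof. unfold gfun. apply Cmult; apply Cpow2; first [apply Csech_lin | apply Csech_linm]. Qed.

Lemma A1z_odd k a x : A1z k a (- x) = - A1z k a x.
Proof. unfold A1z. rewrite Lz_odd, Tz_odd. unfold Rdiv. ring. Qed.
Lemma Gz_odd k a x : Gz k a (- x) = - Gz k a x.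
Proof. unfold Gz. rewrite Lz_odd, Tz_odd. unfold Rdiv. ring. Qed.
Lemma Lq_odd k a x : Lq k a (- x) = - Lq k a x.
Proof. unfold Lq. rewrite Lz_odd. ring. Qed.

Lemma expshift k a M : exp (- (2 * (k*(M-a)))) = exp (2*k*a) * exp (- (2*k*M)).
Proof. rewrite <- exp_plus. f_equal. ring. Qed.

Lemma lim_helper (F : R -> R) V B k a : 0 < k -> 0 <= B ->
  (forall M, a <= M -> Rabs (F M - V) <= B * exp (- (2 * (k*(M-a))))) ->
  forall e, 0 < e -> exists M0, forall M, M0 <= M -> Rabs (F M - V) < e.
Proof. intros Hk HB H e he.
  destruct (exp_small (B * exp (2*k*a)) (2*k) e) as [X HX]; try lra.
  apply Rmult_le_pos; [lra| left; apply exp_pos]. 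
  exists (Rmax X a). intros M HM.
  eapply Rle_lt_trans. apply H. eapply Rle_trans; [apply Rmax_r|apply HM].
  rewrite expshift. rewrite <- Rmult_assoc. apply HX. eapply Rle_trans; [apply Rmax_l|apply HM].
Qed.

Lemma I_mfun k a : 0 < k -> 0 < a ->
  improper_integral (mfun k a) (4/k * (chc k a/shc k a - 2*k*a/shc k a^2)).
Proof. intros Hk Ha. apply (imp_exact (A1z k a)).
  split. intro x; apply dA1z; auto. apply Cmfun.
  apply (lim_helper (fun M => A1z k a M - A1z k a (- M)) _ (4/k * (1/shc k a^2 + 2*chc k a/shc k a)) k a Hk).
  pose proof (shc_pos k a Hk Ha). pose proof (chc_pos k a).
  assert (0 < / k) by (apply Rinv_0_lt_compat; lra).
  assert (0 < / shc k a) by (apply Rinv_0_lt_compat; lra).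
  unfold Rdiv. apply Rmult_le_pos. nra. apply Rplus_le_le_0_compat. apply Rmult_le_pos; [lra| left; apply Rinv_0_lt_compat, pow_lt; lra]. nra.
  intros M HM. rewrite A1z_odd.
  pose proof (Lz_lim k a M Hk Ha HM). pose proof (Tz_lim k a M Hk Ha HM).
  pose proof (shc_pos k a Hk Ha). pose proof (chc_pos k a).
  set (ex := exp (- (2 * (k * (M - a))))) in *.
  unfold A1z.
  set (L := Lz k a M) in *. set (T := Tz k a M) in *. set (sh := shc k a) in *. set (ch := chc k a) in *.
  replace (2 / k * (- L / sh ^ 2 + ch / sh * T / 2) - - (2 / k * (- L / sh ^ 2 + ch / sh * T / 2)) -
    4 / k * (ch / sh - 2 * k * a / sh ^ 2)) with
   (4/k * ((2*k*a - L) / sh^2 - ch/sh * (2 - T)/2)) by (field; lra).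
  assert (0 < / k) by (apply Rinv_0_lt_compat; lra).
  assert (0 < / sh) by (apply Rinv_0_lt_compat; lra).
  assert (A : 0 <= (2*k*a - L) / sh^2 <= ex / sh^2).
  { unfold Rdiv. split. apply Rmult_le_pos; [lra| left; apply Rinv_0_lt_compat, pow_lt; lra].
    apply Rmult_le_compat_r. left; apply Rinv_0_lt_compat, pow_lt; lra. lra. }
  assert (B : 0 <= ch/sh * (2 - T)/2 <= 2*ch/sh * ex).
  { unfold Rdiv. split. apply Rmult_le_pos; [|lra]. apply Rmult_le_pos; [|lra]. nra.
    assert (ch * / sh * (2 - T) <= ch * /sh * (4*ex)) by (apply Rmult_le_compat_l; nra). lra. }
  rewrite Rabs_mult, (Rabs_pos_eq (4/k)) by (unfold Rdiv; nra).
  rewrite (Rmult_assoc (4/k)). apply Rmult_le_compat_l. unfold Rdiv; nra.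
  apply Rabs_le. unfold Rdiv in *. split; nra.
Qed.

Lemma I_gfun k a : 0 < k -> 0 < a ->
  improper_integral (gfun k a) (4/(k*shc k a^2) * (2*k*a*chc k a/shc k a - 1)).
Proof. intros Hk Ha. apply (imp_exact (Gz k a)).
  split. intro x; apply dGz; auto. apply Cgfun.
  apply (lim_helper (fun M => Gz k a M - Gz k a (- M)) _ (4/(k*shc k a^2) * (chc k a/shc k a + 2)) k a Hk).
  pose proof (shc_pos k a Hk Ha). pose proof (chc_pos k a).
  assert (0 < / (k * shc k a^2)) by (apply Rinv_0_lt_compat; apply Rmult_lt_0_compat; [lra|apply pow_lt; lra]).
  assert (0 < / shc k a) by (apply Rinv_0_lt_compat; lra).
  unfold Rdiv. apply Rmult_le_pos. nra. nra.
  intros M HM. rewrite Gz_odd.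
  pose proof (Lz_lim k a M Hk Ha HM). pose proof (Tz_lim k a M Hk Ha HM).
  pose proof (shc_pos k a Hk Ha). pose proof (chc_pos k a).
  set (ex := exp (- (2 * (k * (M - a))))) in *.
  unfold Gz.
  set (L := Lz k a M) in *. set (T := Tz k a M) in *. set (sh := shc k a) in *. set (ch := chc k a) in *.
  assert (Hks : 0 < k * sh^2) by (apply Rmult_lt_0_compat; [lra|apply pow_lt; lra]).
  replace (2 / (k * sh ^ 2) * (ch / sh * L - T / 2) - - (2 / (k * sh ^ 2) * (ch / sh * L - T / 2)) -
      4 / (k * sh ^ 2) * (2 * k * a * ch / sh - 1)) with
   (4/(k*sh^2) * ((2 - T)/2 - ch/sh * (2*k*a - L))) by (field; lra).
  assert (0 < / sh) by (apply Rinv_0_lt_compat; lra).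
  assert (0 < / (k*sh^2)) by (apply Rinv_0_lt_compat; lra).
  assert (A : 0 <= ch/sh * (2*k*a - L) <= ch/sh * ex).
  { unfold Rdiv. split. apply Rmult_le_pos; nra. apply Rmult_le_compat_l; nra. }
  rewrite Rabs_mult, (Rabs_pos_eq (4/(k*sh^2))) by (unfold Rdiv; nra).
  rewrite (Rmult_assoc (4/(k*sh^2))). apply Rmult_le_compat_l. unfold Rdiv; nra.
  apply Rabs_le. unfold Rdiv in *. split; nra.
Qed.

Lemma gfun_le k a x : gfun k a x <= sech (k*(x+a))^2 + sech (k*(x-a))^2.
Proof. unfold gfun. pose proof (sech_pos (k*(x+a))). pose proof (sech_le1 (k*(x+a))).
  pose proof (sech_pos (k*(x-a))). pose proof (sech_le1 (k*(x-a))).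
  assert (sech (k * (x - a)) ^ 2 <= 1) by (simpl; nra).
  assert (0 <= sech (k * (x + a)) ^ 2) by (apply pow2_ge_0). nra. Qed.
Lemma gfun_pos k a x : 0 <= gfun k a x.
Proof. unfold gfun. apply Rmult_le_pos; apply pow2_ge_0. Qed.

Lemma exists_wf k a w f : 0 < k -> 0 < a -> continuity w -> continuity f ->
  (forall x, Rabs (w x) <= 4) ->
  (forall x, Rabs (f x) <= sech (k*(x+a))^2 + sech (k*(x-a))^2) ->
  exists I, improper_integral (fun x => w x * f x) I.
Proof. intros Hk Ha Hw Hf Hw4 Hfb.
  apply (imp_exist _ (pd k a 4 0) (Pd k a 4 0)).
  apply Cmult; auto. apply prim_Pd; auto.
  intro x. unfold pd. rewrite Rabs_mult. pose proof (Hw4 x). pose proof (Hfb x).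
  pose proof (Rabs_pos (w x)). pose proof (Rabs_pos (f x)). nra.
  intros e he.
  destruct (exp_small (32/k * exp (2*k*a)) (2*k) e) as [Y HY]; try lra.
  apply Rmult_le_pos; [unfold Rdiv; assert (0 < /k) by (apply Rinv_0_lt_compat; lra); lra| left; apply exp_pos].
  exists (Rmax Y a). intros M M' HM HM'.
  assert (HaM : a <= M) by (eapply Rle_trans; [apply Rmax_r|apply HM]).
  eapply Rle_lt_trans. apply Pd_tail; auto; lra.
  replace (8*4/k) with (32/k) by (field; lra).
  rewrite expshift. rewrite <- Rmult_assoc. apply HY. eapply Rle_trans; [apply Rmax_l|apply HM].
Qed.

Lemma I1_est k a w d : 0 < k -> 0 < a -> 0 <= d -> continuity w -> (forall x, Rabs (w x) <= 4) ->
  (forall x, Rabs (w x - (1 - a^2)) <= d + Rabs (x^2 - a^2)) ->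
  exists I, improper_integral (fun x => w x * mfun k a x) I /\
   Rabs (I - (1 - a^2) * (4/k * (chc k a/shc k a - 2*k*a/shc k a^2))) <= 4*d/k + 2*PI*(6/k^2 + 2*a/k)/k.
Proof. intros Hk Ha Hd Hw Hw4 Hwd.
  destruct (exists_wf k a w (mfun k a) Hk Ha Hw (Cmfun k a) Hw4 (mfun_bound k a)) as [I HI].
  exists I. split; auto.
  pose proof (imp_lin _ _ _ _ (- (1 - a^2)) HI (I_mfun k a Hk Ha)) as Hh.
  set (V := 4 / k * (chc k a / shc k a - 2 * k * a / shc k a ^ 2)) in *.
  replace (I - (1 - a ^ 2) * V) with (I + - (1 - a ^ 2) * V) by ring.
  assert (Hb : 0 <= 6/k^2 + 2*a/k).
  { assert (0 < /k) by (apply Rinv_0_lt_compat; lra). assert (0 < /k^2) by (apply Rinv_0_lt_compat, pow_lt; lra).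
    unfold Rdiv; nra. }
  apply (imp_bound _ _ (pd k a d (6/k^2 + 2*a/k)) (Pd k a d (6/k^2 + 2*a/k)) _ 0 Hh).
  apply prim_Pd; auto.
  - intro x. replace (w x * mfun k a x + - (1 - a ^ 2) * mfun k a x) with ((w x - (1 - a^2)) * mfun k a x) by ring.
    rewrite Rabs_mult. pose proof (Hwd x). pose proof (mfun_bound k a x).
    pose proof (Rabs_pos (w x - (1 - a ^ 2))). pose proof (Rabs_pos (mfun k a x)).
    pose proof (Rabs_pos (x^2 - a^2)).
    pose proof (sq_sech_bound k a a x Hk eq_refl (Rlt_le _ _ Ha)).
    pose proof (sq_sech_bound k a (-a) x Hk ltac:(ring) (Rlt_le _ _ Ha)).
    change (k * (x + - a)) with (k * (x - a)) in H5.
    pose proof (pow2_ge_0 (sech (k*(x+a)))). pose proof (pow2_ge_0 (sech (k*(x-a)))).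
    unfold pd.
    apply Rle_trans with ((d + Rabs (x ^ 2 - a ^ 2)) * (sech (k * (x + a)) ^ 2 + sech (k * (x - a)) ^ 2)).
    apply Rmult_le_compat; auto. nra.
  - intros M _. apply Pd_bound; auto.
Qed.

Lemma prim_lin F f G g al ga : prim F f -> prim G g ->
  prim (fun x => al * F x + ga * G x) (fun x => al * f x + ga * g x).
Proof. intros [HF HFc] [HG HGc]. split.
  - intro x. apply ddplus; apply ddscal; auto.
  - apply Cplus; apply Cmult; auto; apply Cconst.
Qed.

Lemma I2_est k a w d : 0 < k -> 0 < a -> 2 <= 2*k*a -> 0 <= d -> continuity w -> (forall x, Rabs (w x) <= 4) ->
  (forall x, Rabs (w x - (1 - a^2)) <= d + Rabs (x^2 - a^2)) ->
  exists I, improper_integral (fun x => w x * gfun k a x) I /\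
   Rabs (I - (1 - a^2) * (4/(k*shc k a^2) * (2*k*a*chc k a/shc k a - 1))) <=
     2 * (d + (2*k*a)^2/(2*k^2)) * (2/(k*shc k a^2) * (chc k a/shc k a * (2*k*a) + 1))
     + 2 * ((2*k*a)^2 * exp (-(2*k*a)) / k^2) * ((2*k*a) / (k * shc k a)).
Proof. intros Hk Ha Hc Hd Hw Hw4 Hwd.
  assert (Hgb : forall x, Rabs (gfun k a x) <= sech (k*(x+a))^2 + sech (k*(x-a))^2).
  { intro x. rewrite Rabs_pos_eq by apply gfun_pos. apply gfun_le. }
  destruct (exists_wf k a w (gfun k a) Hk Ha Hw (Cgfun k a) Hw4 Hgb) as [I HI].
  exists I. split; auto.
  pose proof (imp_lin _ _ _ _ (- (1 - a^2)) HI (I_gfun k a Hk Ha)) as Hh.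
  set (V := 4 / (k * shc k a ^ 2) * (2 * k * a * chc k a / shc k a - 1)) in *.
  replace (I - (1 - a ^ 2) * V) with (I + - (1 - a ^ 2) * V) by ring.
  set (c := 2*k*a) in *.
  set (al := d + c^2/(2*k^2)). set (ga := c^2 * exp (- c) / k^2).
  assert (Hik : 0 < /k) by (apply Rinv_0_lt_compat; lra).
  assert (Hik2 : 0 < /k^2) by (apply Rinv_0_lt_compat, pow_lt; lra).
  assert (Hc2 : 0 <= c^2) by apply pow2_ge_0.
  assert (Hal : 0 <= al) by (unfold al; unfold Rdiv; rewrite Rinv_mult; nra).
  assert (Hga : 0 <= ga) by (unfold ga; unfold Rdiv; pose proof (exp_pos (-c)); 
     apply Rmult_le_pos; [apply Rmult_le_pos|]; lra).
  pose proof (shc_pos k a Hk Ha). pose proof (chc_pos k a).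
  apply (imp_bound _ _ (fun x => al * gfun k a x + ga * q2 k a x) (fun x => al * Gz k a x + ga * Lq k a x) _ a Hh).
  - apply prim_lin. split. intro x; apply dGz; auto. apply Cgfun. apply prim_Lq; auto.
  - intro x. replace (w x * gfun k a x + - (1 - a ^ 2) * gfun k a x) with ((w x - (1 - a^2)) * gfun k a x) by ring.
    rewrite Rabs_mult, (Rabs_pos_eq (gfun k a x)) by apply gfun_pos.
    pose proof (Hwd x). pose proof (gfun_pos k a x).
    pose proof (x2_bound2 k a x Hk Hc). fold c in H3.
    pose proof (coshy_g k a x).
    apply Rle_trans with ((d + Rabs (x ^ 2 - a ^ 2)) * gfun k a x). apply Rmult_le_compat_r; auto.
    apply Rle_trans with ((d + (c ^ 2 / (2 * k ^ 2) + c ^ 2 * exp (- c) / (2 * k ^ 2) * cosh (2 * k * x))) * gfun k a x).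
    apply Rmult_le_compat_r; auto. lra.
    unfold al, ga.
    replace ((d + (c ^ 2 / (2 * k ^ 2) + c ^ 2 * exp (- c) / (2 * k ^ 2) * cosh (2 * k * x))) * gfun k a x)
      with ((d + c ^ 2 / (2 * k ^ 2)) * gfun k a x + (c ^ 2 * exp (- c) / (2 * k ^ 2)) * (cosh (2 * k * x) * gfun k a x)) by ring.
    replace (c ^ 2 * exp (- c) / k ^ 2 * q2 k a x) with ((c ^ 2 * exp (- c) / (2 * k ^ 2)) * (2 * q2 k a x)) by (field; lra).
    apply Rplus_le_compat_l. apply Rmult_le_compat_l; auto.
    unfold Rdiv; pose proof (exp_pos (-c)); apply Rmult_le_pos; [apply Rmult_le_pos|]; try lra.
    left; apply Rinv_0_lt_compat; nra.
  - intros M HM. rewrite Gz_odd, Lq_odd.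
    pose proof (Lz_lim k a M Hk Ha HM). pose proof (Tz_bound k a M). apply Rabs_le_inv in H2.
    fold c in H1.
    unfold Gz, Lq. set (L := Lz k a M) in *. set (T := Tz k a M) in *.
    set (sh := shc k a) in *. set (ch := chc k a) in *.
    assert (0 < / sh) by (apply Rinv_0_lt_compat; lra).
    assert (Hks : 0 < / (k*sh^2)) by (apply Rinv_0_lt_compat, Rmult_lt_0_compat; [lra| apply pow_lt; lra]).
    assert (Hks1 : 0 < / (k*sh)) by (apply Rinv_0_lt_compat, Rmult_lt_0_compat; lra).
    assert (G1 : 2 / (k * sh ^ 2) * (ch / sh * L - T / 2) <= 2 / (k * sh ^ 2) * (ch / sh * c + 1)).
    { apply Rmult_le_compat_l. unfold Rdiv; nra. assert (ch / sh * L <= ch/sh * c) by (apply Rmult_le_compat_l; unfold Rdiv; nra; lra). lra. }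
    assert (G2 : / (k * sh) * L <= c / (k * sh)).
    { unfold Rdiv. rewrite Rmult_comm. apply Rmult_le_compat_r; lra. }
    assert (al * (2 / (k * sh ^ 2) * (ch / sh * L - T / 2)) <= al * (2 / (k * sh ^ 2) * (ch / sh * c + 1))) by (apply Rmult_le_compat_l; auto).
    assert (ga * (/ (k * sh) * L) <= ga * (c / (k * sh))) by (apply Rmult_le_compat_l; auto).
    lra.
Qed.

Lemma Rest1 k a d I X c ch sh : 0 < k -> 0 < a -> a^2 <= 1/4 -> 0 <= d -> 16 <= X -> 0 <= c ->
  ch = (X + /X)/2 -> sh = (X - /X)/2 ->
  Rabs (I - (1 - a^2) * (4/k * (ch/sh - c/sh^2))) <= 4*d/k + 2*PI*(6/k^2 + 2*a/k)/k ->
  Rabs (I * k / (4 * (1 - a^2)) - 1) <= 2*d + 16/k^2 + 8*a/k + (4 + 16*c)/X^2.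
Proof. intros Hk Ha Ha2 Hd HX Hc Hch Hsh HI.
  set (Y := X^2). assert (HY : 256 <= Y) by (unfold Y; nra).
  assert (HX0 : 0 < X) by lra.
  assert (E1 : ch/sh - 1 = 2/(Y-1)) by (rewrite Hch, Hsh; unfold Y; field; repeat split; nra).
  assert (E2 : c/sh^2 = 4*c*Y/(Y-1)^2) by (rewrite Hsh; unfold Y; field; repeat split; nra).
  assert (Hsh0 : 0 < sh). { rewrite Hsh. assert (/X < 1). { rewrite <- Rinv_1. apply Rinv_lt_contravar; lra. } lra. }
  set (V := 4/k * (ch/sh - c/sh^2)) in *.
  set (D := I - (1 - a^2) * V) in *.
  assert (Ha1 : 3/4 <= 1 - a^2) by lra.
  replace (I * k / (4 * (1 - a ^ 2)) - 1) with (D * (k / (4*(1-a^2))) + (ch/sh - 1 - c/sh^2))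
    by (unfold D, V; field; repeat split; lra).
  eapply Rle_trans. apply Rabs_triang.
  apply Rplus_le_compat.
  - rewrite Rabs_mult, (Rabs_pos_eq (k / (4 * (1 - a^2)))) by (apply Rdiv_le_0_compat || (unfold Rdiv; apply Rmult_le_pos; [lra| left; apply Rinv_0_lt_compat; lra])).
    assert (Hkk : 0 < k / (4 * (1 - a^2))) by (apply Rdiv_lt_0_compat; lra).
    eapply Rle_trans. apply Rmult_le_compat_r. lra. apply HI.
    replace ((4 * d / k + 2 * PI * (6 / k ^ 2 + 2 * a / k) / k) * (k / (4 * (1 - a ^ 2))))
      with ((d + PI/2 * (6/k^2 + 2*a/k)) / (1 - a^2)) by (field; lra).
    pose proof PI_4. pose proof PI_RGT_0.
    assert (Hq : 0 <= 6/k^2 + 2*a/k).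
    { assert (0 < /k) by (apply Rinv_0_lt_compat; lra). assert (0 < /k^2) by (apply Rinv_0_lt_compat, pow_lt; lra).
      unfold Rdiv; nra. }
    apply (Rmult_le_reg_r (1 - a^2)). lra.
    unfold Rdiv at 1. rewrite Rmult_assoc, Rinv_l, Rmult_1_r by lra.
    assert (PI / 2 * (6 / k ^ 2 + 2 * a / k) <= 2 * (6 / k ^ 2 + 2 * a / k)) by (apply Rmult_le_compat_r; lra).
    assert (E3 : 8/3 * (6 / k^2 + 2*a/k) <= 16 / k ^ 2 + 8 * a / k).
    { assert (0 < a / k) by (apply Rdiv_lt_0_compat; lra).
      replace (8/3 * (6 / k^2 + 2*a/k)) with (16/k^2 + 16/3 * (a/k)) by (field; lra).
      replace (8 * a / k) with (8 * (a/k)) by (field; lra). lra. }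
    assert ((d + 2 * (6 / k ^ 2 + 2 * a / k)) * (1 - a^2) <= d + 2 * (6 / k ^ 2 + 2 * a / k)) by nra.
    nra.
  - rewrite E2. replace (ch / sh - 1 - 4 * c * Y / (Y - 1) ^ 2) with (2/(Y-1) - 4*c*Y/(Y-1)^2) by lra.
    eapply Rle_trans. apply Rabs_triang. rewrite Rabs_Ropp.
    rewrite !Rabs_pos_eq.
    + assert (2 / (Y-1) <= 4 / Y).
      { apply (Rmult_le_reg_r ((Y-1)*Y)). nra.
        replace (2 / (Y - 1) * ((Y - 1) * Y)) with (2*Y) by (field; lra).
        replace (4 / Y * ((Y - 1) * Y)) with (4*(Y-1)) by (field; lra). lra. }
      assert (4 * c * Y / (Y-1)^2 <= 16 * c / Y).
      { apply (Rmult_le_reg_r ((Y-1)^2*Y)). nra.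
        replace (4 * c * Y / (Y - 1) ^ 2 * ((Y - 1) ^ 2 * Y)) with (4*c*Y^2) by (field; lra).
        replace (16 * c / Y * ((Y - 1) ^ 2 * Y)) with (16*c*(Y-1)^2) by (field; lra). assert (HY2 : Y^2 <= 4*(Y-1)^2) by nra. assert (c*Y^2 <= c*(4*(Y-1)^2)) by (apply Rmult_le_compat_l; lra). lra. }
      unfold Y in *. replace ((4 + 16 * c) / X ^ 2) with (4/X^2 + 16*c/X^2) by (field; lra). lra.
    + unfold Rdiv. apply Rmult_le_pos. nra. left; apply Rinv_0_lt_compat; nra.
    + unfold Rdiv. apply Rmult_le_pos. lra. left; apply Rinv_0_lt_compat; lra.
Qed.

Lemma Rest2 k a d I X c ch sh em : 0 < k -> 0 < a -> a^2 <= 1/4 -> 0 <= d -> 16 <= X -> 4 <= c ->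
  ch = (X + /X)/2 -> sh = (X - /X)/2 -> em = /X ->
  Rabs (I - (1 - a^2) * (4/(k*sh^2) * (c*ch/sh - 1))) <=
     2 * (d + c^2/(2*k^2)) * (2/(k*sh^2) * (ch/sh * c + 1)) + 2 * (c^2 * em / k^2) * (c / (k * sh)) ->
  Rabs (I / ((1 - a^2) * (16/k * /X^2 * (c - 1))) - 1) <= 22*d + 12*c^2/k^2 + 12/X^2.
Proof. intros Hk Ha Ha2 Hd HX Hc Hch Hsh Hem HI.
  set (T := 16/k * /X^2 * (c - 1)).
  set (Y := X^2). assert (HY : 256 <= Y) by (unfold Y; nra).
  assert (HX0 : 0 < X) by lra.
  assert (Hsh0 : 0 < sh). { rewrite Hsh. assert (/X < 1). { rewrite <- Rinv_1. apply Rinv_lt_contravar; lra. } lra. }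
  set (V := 4/(k*sh^2) * (c*ch/sh - 1)) in *.
  set (U := 2 * (d + c^2/(2*k^2)) * (2/(k*sh^2) * (ch/sh * c + 1)) + 2 * (c^2 * em / k^2) * (c / (k * sh))) in *.
  assert (EV : V = 16*Y*(c*(Y+1) - (Y-1))/(k*(Y-1)^3)).
  { unfold V. rewrite Hch, Hsh. unfold Y. field. repeat split; nra. }
  assert (ET : T = 16*(c-1)/(k*Y)) by (unfold T, Y; field; split; lra).
  assert (EU : U = 16*(d + c^2/(2*k^2))*Y*(c*(Y+1) + (Y-1))/(k*(Y-1)^3) + 4*c^3/(k^3*(Y-1))).
  { unfold U. rewrite Hch, Hsh, Hem. unfold Y. field. repeat split; nra. }
  assert (HT : 0 < T) by (rewrite ET; apply Rdiv_lt_0_compat; nra).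
  assert (Ha1 : 3/4 <= 1 - a^2) by lra.
  replace (I / ((1 - a ^ 2) * T) - 1) with ((I - (1 - a^2) * V) / ((1 - a^2) * T) + (V / T - 1))
    by (field; split; lra).
  eapply Rle_trans. apply Rabs_triang.
  assert (HU : U <= (16*(d + c^2/(2*k^2)) + c^2/k^2) * T).
  { rewrite EU, ET.
    assert (Hk2 : 0 < /k) by (apply Rinv_0_lt_compat; lra).
    set (al := d + c^2/(2*k^2)).
    assert (Hal : 0 <= al) by (unfold al; unfold Rdiv; pose proof (pow2_ge_0 c); assert (0 < /(2*k^2)) by (apply Rinv_0_lt_compat; nra); nra).
    assert (A1 : Y*(c*(Y+1) + (Y-1))/(k*(Y-1)^3) <= 16*(c-1)/(k*Y)).
    { apply (Rmult_le_reg_r (k*(Y-1)^3*Y)). apply Rmult_lt_0_compat; [apply Rmult_lt_0_compat; [lra|apply pow_lt; lra]|lra].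
      replace (Y * (c * (Y + 1) + (Y - 1)) / (k * (Y - 1) ^ 3) * (k * (Y - 1) ^ 3 * Y)) with (Y^2 * (c*(Y+1) + (Y-1))) by (field; lra).
      replace (16 * (c - 1) / (k * Y) * (k * (Y - 1) ^ 3 * Y)) with (16*(c-1)*(Y-1)^3) by (field; lra).
      assert (B1 : c*(Y+1) + (Y-1) <= 3/2*c*Y) by nra.
      assert (B2 : 3*c/4 <= c - 1) by lra.
      assert (B3 : 98/100*Y^3 <= (Y-1)^3).
      { assert (Y-1 >= 0) by lra. assert ((Y-1)^3 = Y^3 - 3*Y^2 + 3*Y - 1) by ring. nra. }
      assert (Y^2 * (c * (Y + 1) + (Y - 1)) <= Y^2 * (3/2*c*Y)) by (apply Rmult_le_compat_l; [nra|lra]).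
      assert (16*(3*c/4)*(98/100*Y^3) <= 16*(c-1)*(Y-1)^3).
      { apply Rmult_le_compat. nra. nra. lra. lra. }
      nra. }
    assert (A2 : 4*c^3/(k^3*(Y-1)) <= c^2/k^2 * (16*(c-1)/(k*Y))).
    { apply (Rmult_le_reg_r (k^3*(Y-1)*Y)). apply Rmult_lt_0_compat; [apply Rmult_lt_0_compat; [apply pow_lt; lra|lra]|lra].
      replace (4 * c ^ 3 / (k ^ 3 * (Y - 1)) * (k ^ 3 * (Y - 1) * Y)) with (4*c^3*Y) by (field; lra).
      replace (c ^ 2 / k ^ 2 * (16 * (c - 1) / (k * Y)) * (k ^ 3 * (Y - 1) * Y)) with (16*c^2*(c-1)*(Y-1)) by (field; lra).
      assert (c*Y <= 4*(c-1)*(Y-1)) by nra.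
      assert (0 <= c^2) by nra. 
      assert (c^2 * (c*Y) <= c^2 * (4*(c-1)*(Y-1))) by (apply Rmult_le_compat_l; lra). nra. }
    assert (16 * al * Y * (c * (Y + 1) + (Y - 1)) / (k * (Y - 1) ^ 3) = 16 * al * (Y * (c * (Y + 1) + (Y - 1)) / (k * (Y - 1) ^ 3))) by (field; split; lra).
    assert (16 * al * (Y * (c * (Y + 1) + (Y - 1)) / (k * (Y - 1) ^ 3)) <= 16 * al * (16*(c-1)/(k*Y))) by (apply Rmult_le_compat_l; lra).
    nra. }
  apply Rplus_le_compat.
  - assert (HUn : 0 <= U) by (pose proof (Rabs_pos (I - (1 - a ^ 2) * V)); lra).
    unfold Rdiv. rewrite Rabs_mult, Rabs_inv. rewrite (Rabs_pos_eq ((1 - a^2) * T)) by (apply Rmult_le_pos; lra).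
    eapply Rle_trans. apply Rmult_le_compat_r. left; apply Rinv_0_lt_compat; nra. apply HI.
    apply (Rmult_le_reg_r ((1 - a^2) * T)). nra.
    rewrite Rmult_assoc, Rinv_l, Rmult_1_r by nra.
    assert (U <= 4/3 * (1-a^2) * ((16*(d + c^2/(2*k^2)) + c^2/k^2) * T)).
    { assert (0 <= (16*(d + c^2/(2*k^2)) + c^2/k^2) * T) by lra. nra. }
    assert (E : 4/3 * (16*(d + c^2/(2*k^2)) + c^2/k^2) = 64/3*d + 12 * c^2/k^2) by (field; lra).
    assert (0 <= d * ((1 - a^2) * T)) by (apply Rmult_le_pos; [lra | apply Rmult_le_pos; lra]).
    assert (4/3 * (1-a^2) * ((16*(d + c^2/(2*k^2)) + c^2/k^2) * T) = (64/3*d + 12 * c^2/k^2) * ((1 - a^2) * T)) by (rewrite <- E; ring).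
    assert (0 <= 12 / X^2 * ((1 - a^2) * T)).
    { apply Rmult_le_pos. unfold Rdiv; apply Rmult_le_pos; [lra| left; apply Rinv_0_lt_compat; nra]. nra. }
    nra.
  - rewrite EV, ET.
    assert (EN : 16 * Y * (c * (Y + 1) - (Y - 1)) / (k * (Y - 1) ^ 3) / (16 * (c - 1) / (k * Y)) - 1
        = ((4*c-2)*Y^2 - 3*(c-1)*Y + (c-1)) / ((Y-1)^3*(c-1))) by (field; repeat split; lra).
    rewrite EN. rewrite Rabs_pos_eq.
    + apply (Rmult_le_reg_r ((Y-1)^3*(c-1))). apply Rmult_lt_0_compat; [apply pow_lt; lra|lra].
      unfold Rdiv at 1. rewrite Rmult_assoc, Rinv_l, Rmult_1_r by (apply Rgt_not_eq, Rmult_lt_0_compat; [apply pow_lt; lra|lra]).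
      fold Y.
      assert (N1 : (4*c-2)*Y^2 - 3*(c-1)*Y + (c-1) <= 5*(c-1)*Y^2) by nra.
      assert (N2 : 5 * Y^3 <= 12 * (Y-1)^3).
      { assert ((Y-1)^3 = Y^3 - 3*Y^2 + 3*Y - 1) by ring. nra. }
      assert (0 <= 22 * d + 12 * c ^ 2 / k ^ 2).
      { assert (0 < /k^2) by (apply Rinv_0_lt_compat, pow_lt; lra). unfold Rdiv. nra. }
      assert (0 <= (22 * d + 12 * c ^ 2 / k ^ 2) * ((Y - 1) ^ 3 * (c - 1))).
      { apply Rmult_le_pos; auto. apply Rmult_le_pos; [apply pow_le; lra|lra]. }
      assert (12 / Y * ((Y - 1) ^ 3 * (c - 1)) = 12 * (Y-1)^3 * (c-1) / Y) by (field; lra).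
      assert (5*(c-1)*Y^2 <= 12 * (Y-1)^3 * (c-1) / Y).
      { apply (Rmult_le_reg_r Y). lra. replace (12 * (Y - 1) ^ 3 * (c - 1) / Y * Y) with (12 * (Y - 1) ^ 3 * (c - 1)) by (field; lra).
        assert (5*Y^3*(c-1) <= 12 * (Y-1)^3 * (c-1)) by (apply Rmult_le_compat_r; lra). nra. }
      nra.
    + apply Rdiv_le_0_compat || (unfold Rdiv; apply Rmult_le_pos).
      assert (3*(c-1) <= (4*c-2)*Y) by nra. assert (3*(c-1)*Y <= (4*c-2)*Y*Y) by (apply Rmult_le_compat_r; lra). simpl. lra. left; apply Rinv_0_lt_compat, Rmult_lt_0_compat; [apply pow_lt; lra|lra].
Qed.

Lemma rp_pos e y : 0 < Rpower e y.
Proof. unfold Rpower. apply exp_pos. Qed.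

Lemma rp13 eps : 0 < eps < 1 -> Rpower eps (1/3) < 1 /\ Rpower eps (1/3) ^ 3 = eps.
Proof. intros He. split.
  - unfold Rpower. assert (ln eps < 0) by (rewrite <- ln_1; apply ln_increasing; lra).
    assert (exp (1/3 * ln eps) < exp 0) by (apply exp_increasing; lra). rewrite exp_0 in H0. exact H0.
  - rewrite <- Rpower_pow by apply rp_pos. rewrite Rpower_mult.
    replace (1/3 * INR 3) with 1 by (simpl; field). apply Rpower_1; lra.
Qed.

Lemma rp16 eps : 0 < eps -> Rpower eps (1/6) ^ 2 = Rpower eps (1/3).
Proof. intros. rewrite <- Rpower_pow by apply rp_pos. rewrite Rpower_mult. f_equal. simpl; field. Qed.

Lemma rp_mono eps q0 : 0 < q0 -> 0 < eps < q0^3 -> Rpower eps (1/3) < q0.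
Proof. intros Hq He.
  replace q0 with (Rpower (q0^3) (1/3)).
  apply Rlt_Rpower_l. lra. lra.
  rewrite <- Rpower_pow by lra. rewrite Rpower_mult. replace (INR 3 * (1/3)) with 1 by (simpl; field).
  apply Rpower_1; lra.
Qed.

Lemma lneps eps : 0 < eps < 1 ->
  eps * Rabs (ln eps) <= 3 * Rpower eps (1/3) ^ 2.
Proof. intros He. destruct (rp13 eps He) as [Hq1 Hq3]. pose proof (rp_pos eps (1/3)).
  set (q := Rpower eps (1/3)) in *.
  assert (Hl : ln eps = 3 * ln q). { rewrite <- Hq3. rewrite ln_pow by lra. simpl; ring. }
  assert (Hlq : ln q < 0) by (rewrite <- ln_1; apply ln_increasing; lra).
  assert (Hl2 : - ln q <= / q).
  { rewrite <- ln_Rinv by lra. assert (0 < /q) by (apply Rinv_0_lt_compat; lra). pose proof (exp_ineq1_le (ln (/q))). rewrite exp_ln in H1 by lra. lra. }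
  rewrite Hl, Rabs_left by lra. rewrite <- Hq3.
  assert (Ea : q^3 * (- (3 * ln q)) = 3 * q^3 * (- ln q)) by ring.
  assert (Eb : 3 * q^3 * (- ln q) <= 3 * q^3 * / q) by (apply Rmult_le_compat_l; [nra|lra]).
  replace (3 * q^3 * /q) with (3 * q^2) in Eb by (field; lra). lra.
Qed.

Lemma eta0_bounds x : 0 <= eta0 x <= 1.
Proof. unfold eta0. destruct (Rlt_dec (Rabs x) 1). 
  - split. apply sqrt_pos. apply Rle_trans with (sqrt 1). apply sqrt_le_1_alt. pose proof (pow2_ge_0 x). lra. rewrite sqrt_1; lra.
  - lra. Qed.

Lemma eta0_sq a x : 0 < a < 1 -> Rabs (eta0 x ^ 2 - (1 - a^2)) <= Rabs (x^2 - a^2).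
Proof. intros Ha. unfold eta0. destruct (Rlt_dec (Rabs x) 1) as [H|H].
  - assert (0 <= 1 - x^2).
    { assert (x^2 = Rabs x ^2) by (rewrite pow2_abs; auto).
      pose proof (Rabs_pos x). assert (Rabs x * Rabs x <= 1 * 1) by (apply Rmult_le_compat; lra).
      simpl in *. lra. }
    rewrite <- Rsqr_pow2, Rsqr_sqrt by auto. rewrite <- Rabs_Ropp. right. f_equal. ring.
  - assert (1 <= x^2).
    { assert (x^2 = Rabs x ^2) by (rewrite pow2_abs; auto).
      assert (1 * 1 <= Rabs x * Rabs x) by (apply Rmult_le_compat; lra). simpl in *. lra. }
    rewrite (Rabs_pos_eq (x^2 - a^2)) by nra. simpl. rewrite Rmult_0_l.
    rewrite Rabs_left1 by nra. nra.
Qed.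

Lemma w_bounds (f : R -> R) a d0 : 0 < a < 1 -> 0 <= d0 <= 1 -> (forall x, Rabs (f x - eta0 x) <= d0) ->
  forall x, Rabs (f x ^ 2) <= 4 /\ Rabs (f x ^ 2 - (1 - a^2)) <= 3 * d0 + Rabs (x^2 - a^2).
Proof. intros Ha Hd Hf x. pose proof (Hf x). pose proof (eta0_bounds x). pose proof (eta0_sq a x Ha).
  apply Rabs_le_inv in H. split.
  - rewrite Rabs_pos_eq by apply pow2_ge_0. assert (- 2 <= f x <= 2) by lra. nra.
  - replace (f x ^ 2 - (1 - a ^ 2)) with ((f x - eta0 x) * (f x + eta0 x) + (eta0 x ^ 2 - (1 - a^2))) by ring.
    eapply Rle_trans. apply Rabs_triang. apply Rplus_le_compat; auto.
    rewrite Rabs_mult.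
    assert (Rabs (f x + eta0 x) <= 3) by (apply Rabs_le; lra).
    assert (Rabs (f x - eta0 x) <= d0) by (apply Rabs_le; lra).
    pose proof (Rabs_pos (f x - eta0 x)). pose proof (Rabs_pos (f x + eta0 x)).
    nra.
Qed.

Lemma Bfacts a b b0 : 0 < a -> a^2 <= 1/4 -> Rabs b <= b0 -> b0 < 1 ->
  0 < Bpar a b /\ Bpar a b <= 1 /\ 3*(1 - b0^2)/8 <= Bpar a b.
Proof. intros Ha Ha2 Hb Hb0.
  assert (Hb2 : b^2 <= b0^2). { rewrite <- pow2_abs. pose proof (Rabs_pos b). apply pow_incr; lra. }
  assert (H2 : 0 < sqrt 2) by (apply sqrt_lt_R0; lra).
  assert (Hs1 : 0 < sqrt (1 - a^2)) by (apply sqrt_lt_R0; lra).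
  assert (Hs2 : 0 < sqrt (1 - b^2)).
  { apply sqrt_lt_R0. pose proof (Rabs_pos b). assert (b0^2 < 1) by nra. lra. }
  assert (Hpos : 0 < Bpar a b).
  { unfold Bpar. apply Rmult_lt_0_compat; [apply Rmult_lt_0_compat|]; auto. apply Rinv_0_lt_compat; auto. }
  assert (HB2 : Bpar a b ^ 2 = (1 - a^2) * (1 - b^2) / 2).
  { unfold Bpar. replace ((/ sqrt 2 * sqrt (1 - a ^ 2) * sqrt (1 - b ^ 2)) ^ 2) with
      ((sqrt (1 - a^2) * sqrt (1 - a^2)) * (sqrt (1 - b^2) * sqrt (1 - b^2)) / (sqrt 2 * sqrt 2)) by (field; lra).
    rewrite !sqrt_sqrt; try lra. pose proof (Rabs_pos b). nra. }
  assert (HBle : Bpar a b <= 1).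
  { destruct (Rle_dec (Bpar a b) 1); auto. exfalso. assert (1 < Bpar a b ^2) by nra.
    pose proof (pow2_ge_0 a). pose proof (pow2_ge_0 b). assert ((1 - a^2) * (1 - b^2) <= 1) by nra. lra. }
  repeat split; auto.
  assert (Bpar a b ^2 <= Bpar a b) by nra.
  assert (3 * (1 - b0^2)/8 <= Bpar a b ^2).
  { rewrite HB2. assert (0 <= 1 - b0^2) by (pose proof (Rabs_pos b); nra). nra. }
  lra.
Qed.

Theorem lemma4 (eta deta ddeta : R -> R -> R) (a b adot bdot Bdot : R -> R)
  (b0 C1 C2 : R) :
  eta_family eta deta ddeta ->
  0 < C1 -> 0 < C2 -> 0 <= b0 < 1 ->
  (exists e1 : R, 0 < e1 /\ forall eps : R, 0 < eps < e1 ->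
     Rabs (b eps) <= b0 /\ 0 < a eps < 1 /\
     a eps <= C1 * Rpower eps (1/6) /\
     exp (- (4 * Bpar (a eps) (b eps) * a eps / eps))
       <= C2 * eps ^ 2 * Rabs (ln eps)) ->
  exists C e0 : R, 0 < C /\ 0 < e0 /\ forall eps : R, 0 < eps < e0 ->
    let av := a eps in let bv := b eps in
    let B := Bpar av bv in
    exists I1 I2 : R,
      improper_integral (f_tanh (eta eps) eps av bv) I1 /\
      improper_integral (f_sech (eta eps) eps av bv) I2 /\
      exists r1 r2 : R,
        Rabs r1 <= C * Rpower eps (1/3) /\ Rabs r2 <= C * Rpower eps (1/3) /\
        1/2 * bdot eps * sqrt (1 - bv ^ 2) * I1
          - / eps * bv * (sqrt (1 - bv ^ 2)) ^ 3 * (B * adot eps + Bdot eps * av) * I2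
        = 2 * eps * bdot eps * sqrt (1 - bv ^ 2) * / B * (1 - av ^ 2) * (1 + r1)
          - 16 * bv * (sqrt (1 - bv ^ 2)) ^ 3 * (adot eps + / B * Bdot eps * av)
              * (1 - av ^ 2) * exp (- (4 * B * av / eps))
              * (2 * B * av / eps - 1) * (1 + r2).
Proof.
  intros Hfam HC1 HC2 Hb0 [e2 [He2 Hh]].
  destruct Hfam as [[e0 [He0 H0]] [_ [_ [Ceta [e1 [HCeta [He1 Hg]]]]]]].
  set (beta0 := 3*(1 - b0^2)/8).
  assert (Hbeta0 : 0 < beta0) by (unfold beta0; nra).
  assert (Hib : 0 < / beta0) by (apply Rinv_0_lt_compat; lra).
  assert (Hib2 : 0 < / beta0^2) by (apply Rinv_0_lt_compat, pow_lt; lra).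
  set (C := 66*Ceta + 48*C1^2 + 108*C2 + 16/beta0^2 + 8/beta0 + 1).
  assert (HC : 0 < C) by (unfold C; unfold Rdiv; nra).
  assert (Hi1 : 0 < / (Ceta + 1)) by (apply Rinv_0_lt_compat; lra).
  assert (Hi2 : 0 < / (4*C1^2 + 1)) by (apply Rinv_0_lt_compat; nra).
  assert (Hi3 : 0 < exp (-8) / (3*C2 + 1)) by (apply Rdiv_lt_0_compat; [apply exp_pos|lra]).
  set (q0 := Rmin (Rmin (1/2) (/(Ceta+1))) (Rmin (/(4*C1^2+1)) (exp (-8) / (3*C2+1)))).
  assert (Hq0 : 0 < q0) by (unfold q0; repeat apply Rmin_pos; lra).
  assert (Hq0a : q0 <= 1/2 /\ q0 <= /(Ceta+1) /\ q0 <= /(4*C1^2+1) /\ q0 <= exp (-8) / (3*C2+1)).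
  { unfold q0. repeat split.
    - eapply Rle_trans; apply Rmin_l.
    - eapply Rle_trans; [apply Rmin_l|apply Rmin_r].
    - eapply Rle_trans; [apply Rmin_r|apply Rmin_l].
    - eapply Rle_trans; apply Rmin_r. }
  exists C, (Rmin (Rmin e0 e1) (Rmin e2 (q0^3))).
  split; auto. split.
  { repeat apply Rmin_pos; try lra. apply pow_lt; lra. }
  intros eps Heps.
  assert (Hm1 := Rmin_l (Rmin e0 e1) (Rmin e2 (q0^3))).
  assert (Hm2 := Rmin_r (Rmin e0 e1) (Rmin e2 (q0^3))).
  assert (He0' : 0 < eps < e0) by (pose proof (Rmin_l e0 e1); lra).
  assert (He1' : 0 < eps < e1) by (pose proof (Rmin_r e0 e1); lra).
  assert (He2' : 0 < eps < e2) by (pose proof (Rmin_l e2 (q0^3)); lra).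
  assert (Heq : 0 < eps < q0^3) by (pose proof (Rmin_r e2 (q0^3)); lra).
  cbv zeta.
  destruct (Hh eps He2') as [Hb [Ha [HaC Hexp]]].
  set (av := a eps) in *. set (bv := b eps) in *.
  assert (Hq0c : q0^3 <= 1/8) by (destruct Hq0a as [Hh1 _]; assert (q0^3 <= (1/2)^3) by (apply pow_incr; lra); lra).
  assert (Heps1 : 0 < eps < 1) by lra.
  pose proof (rp_mono eps q0 Hq0 Heq) as Hqq0.
  destruct (rp13 eps Heps1) as [Hq1 Hq3].
  pose proof (rp_pos eps (1/3)) as Hqp.
  pose proof (lneps eps Heps1) as Hln.
  pose proof (rp16 eps (proj1 Heps1)) as Hr6.
  pose proof (rp_pos eps (1/6)) as Hrp.
  set (q := Rpower eps (1/3)) in *.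
  set (r := Rpower eps (1/6)) in *.
  destruct Hq0a as [Hqa [Hqb [Hqc Hqd]]].
  assert (HCq : Ceta * q <= 1).
  { assert (Ceta * q <= Ceta * / (Ceta + 1)) by (apply Rmult_le_compat_l; lra).
    assert (Ceta * / (Ceta+1) <= 1). { apply (Rmult_le_reg_r (Ceta+1)). lra. rewrite Rmult_assoc, Rinv_l; lra. }
    lra. }
  assert (Ha2q : av^2 <= C1^2 * q).
  { rewrite <- Hr6. assert (av <= C1 * r) by auto. replace (C1^2 * r^2) with ((C1*r)^2) by ring.
    apply pow_incr; lra. }
  assert (Ha2 : av^2 <= 1/4).
  { assert (C1^2 * q <= C1^2 * /(4*C1^2+1)) by (apply Rmult_le_compat_l; nra).
    assert (C1^2 * /(4*C1^2+1) <= 1/4).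
    { apply (Rmult_le_reg_r (4*C1^2+1)). nra. rewrite Rmult_assoc, Rinv_l by nra. nra. }
    lra. }
  assert (Hepsq : eps <= q) by (rewrite <- Hq3; assert (q^3 <= q^1) by (apply Rle_pow_le1 || (simpl; nra)); simpl in *; nra).
  destruct (Bfacts av bv b0 (proj1 Ha) Ha2 Hb (proj2 Hb0)) as [HB0 [HB1 HBb]].
  fold beta0 in HBb.
  set (B := Bpar av bv) in *.
  set (k := / eps * B).
  assert (Hk : 0 < k) by (unfold k; apply Rmult_lt_0_compat; [apply Rinv_0_lt_compat|]; lra).
  assert (Hik : / k = eps / B) by (unfold k; field; lra).
  assert (Hikq : / k <= q / beta0).
  { rewrite Hik. apply Rle_trans with (eps / beta0).
    - unfold Rdiv. apply Rmult_le_compat_l. lra. apply Rinv_le_contravar; lra.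
    - unfold Rdiv. apply Rmult_le_compat_r; lra. }
  set (c := 2 * k * av).
  assert (Hc0 : 0 < c) by (unfold c; nra).
  assert (Hexpc : exp (- (4 * B * av / eps)) = exp (- (2 * c))) by (f_equal; unfold c, k; field; lra).
  rewrite Hexpc in Hexp |- *.
  assert (Hlneps : C2 * eps^2 * Rabs (ln eps) <= 3 * C2 * q).
  { pose proof (Rabs_pos (ln eps)).
    assert (eps^2 * Rabs (ln eps) <= eps * (3 * q^2)) by (simpl; rewrite Rmult_1_r, Rmult_assoc; apply Rmult_le_compat_l; lra).
    assert (eps * (3*q^2) <= 3 * q) by (simpl; nra).
    nra. }
  assert (HEx : exp (- (2*c)) <= 3 * C2 * q) by lra.
  assert (HEx8 : exp (- (2*c)) <= exp (-8)).
  { assert (3 * C2 * q <= 3 * C2 * (exp (-8) / (3 * C2 + 1))) by (apply Rmult_le_compat_l; lra).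
    assert (3 * C2 * (exp (-8) / (3 * C2 + 1)) <= exp (-8)).
    { pose proof (exp_pos (-8)). apply (Rmult_le_reg_r (3*C2+1)). lra. unfold Rdiv.
      replace (3 * C2 * (exp (-8) * / (3 * C2 + 1)) * (3 * C2 + 1)) with (3*C2*exp (-8)) by (field; lra). nra. }
    lra. }
  assert (Hc4 : 4 <= c).
  { destruct (Rle_dec 4 c); auto. exfalso. assert (exp (-8) < exp (-(2*c))) by (apply exp_increasing; lra). lra. }
  assert (Hc2eps : c <= 2 / eps).
  { unfold c, k. replace (2 * (/ eps * B) * av) with (2 / eps * (B * av)) by (field; lra).
    rewrite <- (Rmult_1_r (2/eps)) at 2. apply Rmult_le_compat_l. unfold Rdiv; assert (0 < /eps) by (apply Rinv_0_lt_compat; lra); lra.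
    nra. }
  assert (HcEx : c * exp (- (2*c)) <= 6 * C2 * q).
  { apply Rle_trans with (2/eps * (C2 * eps^2 * Rabs (ln eps))).
    apply Rmult_le_compat; try lra. left; apply exp_pos.
    replace (2 / eps * (C2 * eps ^ 2 * Rabs (ln eps))) with (2 * C2 * (eps * Rabs (ln eps))) by (field; lra).
    assert (2 * C2 * (eps * Rabs (ln eps)) <= 2 * C2 * (3 * q^2)) by (apply Rmult_le_compat_l; lra).
    assert (q^2 <= q) by (simpl; nra). nra. }
  set (X := exp c).
  assert (HX2 : exp (- (2*c)) = / X^2).
  { unfold X. rewrite exp_Ropp. f_equal. simpl. rewrite Rmult_1_r, <- exp_plus. f_equal. ring. }
  assert (HX : 16 <= X).
  { unfold X. assert (E1 : 2 <= exp 1) by (pose proof (exp_ineq1_le 1); lra).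
    assert (exp 4 = exp 1 ^ 4) by (simpl; rewrite Rmult_1_r, <- !exp_plus; f_equal; ring).
    assert (2^4 <= exp 1 ^ 4) by (apply pow_incr; lra).
    assert (exp 4 <= exp c) by (apply exple; lra). simpl in *. lra. }
  assert (HX0 : 0 < X) by lra.
  assert (Hcont : continuity (fun x => eta eps x ^ 2)).
  { apply Cpow2. destruct (H0 eps He0') as [_ [Hd _]]. apply (Cfromd _ (deta eps)). exact Hd. }
  assert (Hwb : forall x, Rabs (eta eps x ^ 2) <= 4 /\ Rabs (eta eps x ^ 2 - (1 - av^2)) <= 3 * (Ceta * q) + Rabs (x^2 - av^2)).
  { apply w_bounds. lra. split; [apply Rmult_le_pos; lra|lra].
    intro x. destruct (Hg eps He1' x) as [Hx _]. exact Hx. }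
  assert (Hd0 : 0 <= 3 * (Ceta * q)) by (apply Rmult_le_pos; [lra|apply Rmult_le_pos; lra]).
  destruct (I1_est k av (fun x => eta eps x ^ 2) (3 * (Ceta * q)) Hk (proj1 Ha) Hd0 Hcont
    (fun x => proj1 (Hwb x)) (fun x => proj2 (Hwb x))) as [I1 [HI1 HI1b]].
  destruct (I2_est k av (fun x => eta eps x ^ 2) (3 * (Ceta * q)) Hk (proj1 Ha) ltac:(fold c; lra) Hd0 Hcont
    (fun x => proj1 (Hwb x)) (fun x => proj2 (Hwb x))) as [I2 [HI2 HI2b]].
  exists I1, I2. split; [exact HI1|]. split; [exact HI2|].
  fold c in HI1b, HI2b.
  assert (Hch : chc k av = (X + / X) / 2) by (unfold chc, X; fold c; apply cosh_exp).
  assert (Hsh : shc k av = (X - / X) / 2) by (unfold shc, X; fold c; apply sinh_exp).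
  assert (Hem : exp (- c) = / X) by (unfold X; apply exp_Ropp).
  pose proof (Rest1 k av (3 * (Ceta * q)) I1 X c (chc k av) (shc k av) Hk (proj1 Ha) Ha2 Hd0 HX (Rlt_le _ _ Hc0) Hch Hsh HI1b) as HR1.
  pose proof (Rest2 k av (3 * (Ceta * q)) I2 X c (chc k av) (shc k av) (exp (- c)) Hk (proj1 Ha) Ha2 Hd0 HX Hc4 Hch Hsh Hem HI2b) as HR2.
  exists (I1 * k / (4 * (1 - av^2)) - 1), (I2 / ((1 - av^2) * (16/k * /X^2 * (c - 1))) - 1).
  split; [|split].
  - eapply Rle_trans. apply HR1.
    assert (Hik2 : / k^2 <= q / beta0^2).
    { rewrite <- pow_inv. apply Rle_trans with ((q/beta0)^2). apply pow_incr; split; [left; apply Rinv_0_lt_compat; lra| lra].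
      unfold Rdiv. rewrite Rpow_mult_distr, pow_inv. apply Rmult_le_compat_r. lra. simpl; nra. }
    assert (Hak : av / k <= q / beta0).
    { unfold Rdiv. rewrite Rmult_comm. apply Rle_trans with (/k). rewrite <- (Rmult_1_r (/k)) at 2.
      apply Rmult_le_compat_l. left; apply Rinv_0_lt_compat; lra. lra. exact Hikq. }
    replace ((4 + 16 * c) / X ^ 2) with (4 * exp (-(2*c)) + 16 * (c * exp (-(2*c)))) by (rewrite HX2; field; lra).
    replace (16 / k ^ 2) with (16 * / k^2) by (unfold Rdiv; auto).
    replace (8 * av / k) with (8 * (av / k)) by (unfold Rdiv; ring).
    unfold C. unfold Rdiv in *. nra.
  - eapply Rle_trans. apply HR2.
    replace (12 * c^2 / k^2) with (48 * av^2) by (unfold c; field; lra).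
    replace (12 / X^2) with (12 * exp (-(2*c))) by (rewrite HX2; field; lra).
    unfold C. unfold Rdiv in *. nra.
  - assert (Hce : 2*B*av = c*eps) by (unfold c, k; field; lra).
    rewrite HX2. unfold c, k. field. repeat split; try lra; nra.
Qed.
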